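(* Let $m\in\mathbb{N}_0$ and $n\in\mathbb{N}$, and fix a word pattern of $m$ letters $S$ and $n$ letters $T$ whose last letter is $T$. Then there are integers $c_1,\dots,c_m$, depending only on the pattern and not on $g$, such that for every $g\in\mathcal{H}(\mathbb{D})$ the corresponding $g$-word $L\in W^T_g(m,n)$ satisfies $$L=S_g^mT_g^n+\sum_{j=1}^mc_jS_g^{m-j}T_g^{n+j}.$$
   Context: $\mathcal{H}(\mathbb{D})$ analytic functions on the unit disc. For $g\in\mathcal{H}(\mathbb{D})$: $T_gf(z)=\int_0^zf(\zeta)g'(\zeta)d\zeta$, $S_gf(z)=\int_0^zf'(\zeta)g(\zeta)d\zeta$, with $S_g^0$ the identity. $W^T_g(m,n)$ is the set of products of $m$ factors $S_g$ and $n$ factors $T_g$ (in any order) whose last (rightmost) factor is $T_g$. *)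

(* Defs.v *)
From Stdlib Require Import Reals ZArith List ClassicalEpsilon.
From Coquelicot Require Import Coquelicot.
Open Scope R_scope.

Definition in_disc (z : C) : Prop := Cmod z < 1.

Definition cdiff (f : C -> C) (z : C) : Prop :=
  @ex_derive C_AbsRing C_NormedModule f z.

Definition holo_disc (f : C -> C) : Prop := forall z, in_disc z -> cdiff f z.

(* complex derivative f'(z) (chosen by description; default 0 if it does not exist) *)
Definition cderiv (f : C -> C) (z : C) : C :=
  match excluded_middle_informative (cdiff f z) with
  | left H => proj1_sig (constructive_indefinite_description _ H)
  | right _ => RtoC 0
  end.

(* Complex line integral  int_0^z h(zeta) d zeta  along the segment [0, z]:
   z * int_0^1 h(t z) dt, the real integral being taken componentwise. *)
Definition cint0 (h : C -> C) (z : C) : C :=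
  Cmult z (RInt (fun t => Re (h (Cmult (RtoC t) z))) 0 1,
           RInt (fun t => Im (h (Cmult (RtoC t) z))) 0 1).

Definition Tg (g : C -> C) (f : C -> C) : C -> C :=
  cint0 (fun w => Cmult (f w) (cderiv g w)).

Definition Sg (g : C -> C) (f : C -> C) : C -> C :=
  cint0 (fun w => Cmult (cderiv f w) (g w)).

Fixpoint op_pow (A : (C -> C) -> (C -> C)) (k : nat) (f : C -> C) : C -> C :=
  match k with
  | O => f
  | S k' => A (op_pow A k' f)
  end.

(* A word pattern: a list of letters, [true] = T, [false] = S, read left to
   right as an operator product  A_1 A_2 ... A_N  (rightmost factor applied first). *)
Definition word_op (g : C -> C) (w : list bool) (f : C -> C) : C -> C :=
  fold_right (fun (b : bool) (F : C -> C) => if b then Tg g F else Sg g F) f w.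

Definition count_T (w : list bool) : nat := count_occ Bool.bool_dec w true.
Definition count_S (w : list bool) : nat := count_occ Bool.bool_dec w false.

Definition is_WT_pattern (m n : nat) (w : list bool) : Prop :=
  count_S w = m /\ count_T w = n /\ last w false = true.

(* Main.v *)
Require Import Defs.
From Stdlib Require Import Reals ZArith List Lra Lia ClassicalEpsilon FunctionalExtensionality.
From Coquelicot Require Import Coquelicot.
Open Scope R_scope.


Lemma im_le_Cmod (z : C) : Rabs (Im z) <= Cmod z.
Proof. pose proof (Rmax_Cmod z). destruct z; simpl in *. pose proof (Rmax_r (Rabs r) (Rabs r0)). lra. Qed.

Lemma re_le_Cmod' (z : C) : Rabs (Re z) <= Cmod z.
Proof. apply re_le_Cmod. Qed.

Lemma C_decomp (z : C) : z = (RtoC (Re z) + RtoC (Im z) * Ci)%C.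
Proof. destruct z as [x y]. unfold RtoC, Ci, Cplus, Cmult; simpl. f_equal; ring. Qed.

Lemma Cmod_le_sum (z : C) : Cmod z <= Rabs (Re z) + Rabs (Im z).
Proof.
  rewrite (C_decomp z) at 1. eapply Rle_trans. apply Cmod_triangle.
  rewrite Cmod_mult, !Cmod_R, Cmod_Ci. lra.
Qed.

Lemma Cmod_sub_sym (a b : C) : Cmod (a - b) = Cmod (b - a).
Proof. replace (a - b)%C with (- (b - a))%C by ring. apply Cmod_opp. Qed.

Lemma Cmod_tri3 (a b c : C) : Cmod (a + b + c) <= Cmod a + Cmod b + Cmod c.
Proof. eapply Rle_trans. apply Cmod_triangle. pose proof (Cmod_triangle a b). lra. Qed.

Lemma Cmod_sub_le (a b : C) : Cmod (a - b) <= Cmod a + Cmod b.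
Proof. unfold Cminus. eapply Rle_trans. apply Cmod_triangle. rewrite Cmod_opp. lra. Qed.

Lemma Cmod_diff_ge (a b : C) : Cmod a - Cmod b <= Cmod (a - b).
Proof. replace a with (a - b + b)%C at 1 by ring. pose proof (Cmod_triangle (a-b) b). lra. Qed.

Definition CD (f : C -> C) (z l : C) : Prop :=
  forall eps, 0 < eps -> exists del, 0 < del /\
    forall w, Cmod (w - z) < del -> Cmod (f w - f z - l * (w - z)) <= eps * Cmod (w - z).

Definition Ccont (f : C -> C) (z : C) : Prop :=
  forall eps, 0 < eps -> exists del, 0 < del /\
    forall w, Cmod (w - z) < del -> Cmod (f w - f z) < eps.

Lemma is_derive_CD (f : C -> C) z l :
  @is_derive C_AbsRing C_NormedModule f z l -> CD f z l.
Proof.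
  intros [_ Hd] eps Heps.
  assert (Hz : is_filter_lim (locally z) z) by (intros P HP; exact HP).
  specialize (Hd z Hz (mkposreal eps Heps)).
  apply (locally_le_locally_norm (K:=C_AbsRing) (V:=AbsRing_NormedModule C_AbsRing)) in Hd. destruct Hd as [d Hd].
  exists d. split. apply cond_pos. intros w Hw.
  assert (Hb : ball_norm (V:=AbsRing_NormedModule C_AbsRing) z d w). { exact Hw. }
  specialize (Hd w Hb). simpl in Hd. change (norm (minus w z)) with (Cmod (w - z)) in Hd.
  unfold norm in Hd; simpl in Hd.
  refine (Rle_trans _ _ _ (Req_le _ _ _) Hd). f_equal.
  unfold minus, plus, opp, scal, mult; simpl. unfold Cminus. change (mult (w + - z)%C l) with ((w + - z) * l)%C. ring.
Qed.

Lemma CD_is_derive (f : C -> C) z l :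
  CD f z l -> @is_derive C_AbsRing C_NormedModule f z l.
Proof.
  intros H. split. apply is_linear_scal_l.
  intros x Hx. apply (is_filter_lim_locally_unique (K:=C_AbsRing) (V:=AbsRing_NormedModule C_AbsRing)) in Hx. subst x.
  intros eps. apply (locally_norm_le_locally (K:=C_AbsRing) (V:=AbsRing_NormedModule C_AbsRing)).
  destruct (H eps (cond_pos eps)) as [d [Hd Hw]].
  exists (mkposreal d Hd). intros y Hy. unfold ball_norm in Hy. simpl in Hy.
  change (norm (minus y z)) with (Cmod (y - z)) in Hy. specialize (Hw y Hy).
  change (norm (minus y z)) with (Cmod (y - z)).
  unfold norm; simpl.
  refine (Rle_trans _ _ _ (Req_le _ _ _) Hw). f_equal.
  unfold minus, plus, opp, scal, mult; simpl. unfold Cminus. change (mult (y + - z)%C l) with ((y + - z) * l)%C. ring.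
Qed.

Lemma CD_unique f z l l' : CD f z l -> CD f z l' -> l = l'.
Proof.
  intros H1 H2. apply (proj2 (Ceq_minus l l')). apply Cmod_eq_0.
  apply Rle_antisym; [|apply Cmod_ge_0].
  apply Rnot_lt_le. intros Hpos.
  set (e := Cmod (l - l') / 4).
  assert (He : 0 < e) by (unfold e; lra).
  destruct (H1 e He) as [d1 [Hd1 K1]]. destruct (H2 e He) as [d2 [Hd2 K2]].
  set (h := Rmin d1 d2 / 2).
  assert (Hh : 0 < h) by (unfold h; unfold Rmin; destruct Rle_dec; lra).
  assert (Hh1 : h < d1) by (unfold h; pose proof (Rmin_l d1 d2); lra).
  assert (Hh2 : h < d2) by (unfold h; pose proof (Rmin_r d1 d2); lra).
  set (w := (z + RtoC h)%C).
  assert (Hw : Cmod (w - z) = h). { unfold w. replace (z + h - z)%C with (RtoC h) by ring. rewrite Cmod_R. apply Rabs_pos_eq. lra. }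
  specialize (K1 w). specialize (K2 w). rewrite Hw in K1, K2.
  specialize (K1 Hh1). specialize (K2 Hh2).
  assert (Cmod ((l - l') * (w - z)) <= 2 * e * h).
  { replace ((l - l') * (w - z))%C with ((f w - f z - l' * (w - z)) - (f w - f z - l * (w - z)))%C by ring.
    eapply Rle_trans. apply Cmod_sub_le. lra. }
  rewrite Cmod_mult, Hw in H. unfold e in H. nra.
Qed.

Lemma cdiff_CD f z : cdiff f z <-> exists l, CD f z l.
Proof.
  unfold cdiff, ex_derive. split.
  - intros [l Hl]. exists l. apply is_derive_CD. exact Hl.
  - intros [l Hl]. exists l. apply CD_is_derive. exact Hl.
Qed.

Lemma cderiv_CD f z l : CD f z l -> cderiv f z = l.
Proof.
  intros H. unfold cderiv. destruct excluded_middle_informative as [Hc|Hc].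
  - destruct constructive_indefinite_description as [l' Hl']. simpl.
    eapply CD_unique. apply is_derive_CD. exact Hl'. exact H.
  - exfalso. apply Hc. apply cdiff_CD. eauto.
Qed.

Lemma cderiv_nodiff f z : ~ cdiff f z -> cderiv f z = RtoC 0.
Proof. intros H. unfold cderiv. destruct excluded_middle_informative; tauto. Qed.


Definition near (z : C) (P : C -> Prop) : Prop :=
  exists del, 0 < del /\ forall w, Cmod (w - z) < del -> P w.

Lemma near_and z P Q : near z P -> near z Q -> near z (fun w => P w /\ Q w).
Proof.
  intros [d1 [H1 K1]] [d2 [H2 K2]]. exists (Rmin d1 d2). split.
  unfold Rmin; destruct Rle_dec; lra.
  intros w Hw. split; [apply K1|apply K2]; pose proof (Rmin_l d1 d2); pose proof (Rmin_r d1 d2); lra.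
Qed.

Lemma near_mono z (P Q : C -> Prop) : (forall w, P w -> Q w) -> near z P -> near z Q.
Proof. intros H [d [Hd K]]. exists d. split; auto. Qed.

Lemma near_ball z r : 0 < r -> near z (fun w => Cmod (w - z) < r).
Proof. intros. exists r. split; auto. Qed.

Lemma CD_near f z l : CD f z l <-> forall eps, 0 < eps -> near z (fun w => Cmod (f w - f z - l * (w - z)) <= eps * Cmod (w - z)).
Proof. unfold CD, near. tauto. Qed.

Lemma Ccont_near f z : Ccont f z <-> forall eps, 0 < eps -> near z (fun w => Cmod (f w - f z) < eps).
Proof. unfold Ccont, near. tauto. Qed.

Lemma Ccont_bound f z : Ccont f z -> near z (fun w => Cmod (f w) <= Cmod (f z) + 1).
Proof.
  intros H. apply (near_mono z (fun w => Cmod (f w - f z) < 1)).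
  - intros w Hw. replace (f w) with (f w - f z + f z)%C by ring.
    pose proof (Cmod_triangle (f w - f z) (f z)). lra.
  - apply H. lra.
Qed.

Lemma CD_lip f z l : CD f z l -> near z (fun w => Cmod (f w - f z) <= (Cmod l + 1) * Cmod (w - z)).
Proof.
  intros H. apply (near_mono z (fun w => Cmod (f w - f z - l * (w - z)) <= 1 * Cmod (w - z))).
  - intros w Hw. replace (f w - f z)%C with ((f w - f z - l * (w - z)) + l * (w - z))%C by ring.
    eapply Rle_trans. apply Cmod_triangle. rewrite Cmod_mult. lra.
  - apply H. lra.
Qed.

Lemma CD_cont f z l : CD f z l -> Ccont f z.
Proof.
  intros H. apply Ccont_near. intros eps Heps.
  pose proof (Cmod_ge_0 l).
  apply (near_mono z (fun w => Cmod (f w - f z) <= (Cmod l + 1) * Cmod (w - z) /\ Cmod (w - z) < eps / (Cmod l + 1))).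
  - intros w [H1 H2]. apply Rmult_lt_compat_l with (r := Cmod l + 1) in H2; [|lra].
    replace ((Cmod l + 1) * (eps / (Cmod l + 1))) with eps in H2 by (field; lra). lra.
  - apply near_and. apply CD_lip; auto. apply near_ball. apply Rdiv_lt_0_compat; lra.
Qed.

Lemma CD_const c z : CD (fun _ => c) z 0.
Proof. intros eps He. exists 1. split. lra. intros w _. replace (c - c - 0 * (w - z))%C with (RtoC 0) by ring. rewrite Cmod_0. pose proof (Cmod_ge_0 (w - z)). nra. Qed.

Lemma CD_id z : CD (fun w => w) z 1.
Proof. intros eps He. exists 1. split. lra. intros w _. replace (w - z - 1 * (w - z))%C with (RtoC 0) by ring. rewrite Cmod_0. pose proof (Cmod_ge_0 (w - z)). nra. Qed.

Lemma CD_plus f g z lf lg : CD f z lf -> CD g z lg -> CD (fun w => f w + g w)%C z (lf + lg)%C.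
Proof.
  intros Hf Hg. apply CD_near. intros eps He.
  apply (near_mono z (fun w => Cmod (f w - f z - lf * (w - z)) <= eps/2 * Cmod (w - z) /\ Cmod (g w - g z - lg * (w - z)) <= eps/2 * Cmod (w - z))).
  - intros w [H1 H2]. replace (f w + g w - (f z + g z) - (lf + lg) * (w - z))%C with ((f w - f z - lf * (w - z)) + (g w - g z - lg * (w - z)))%C by ring.
    eapply Rle_trans. apply Cmod_triangle. lra.
  - apply near_and; [apply Hf|apply Hg]; lra.
Qed.

Lemma CD_scal c f z l : CD f z l -> CD (fun w => c * f w)%C z (c * l)%C.
Proof.
  intros Hf. apply CD_near. intros eps He. pose proof (Cmod_ge_0 c).
  apply (near_mono z (fun w => Cmod (f w - f z - l * (w - z)) <= eps / (Cmod c + 1) * Cmod (w - z))).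
  - intros w H1. replace (c * f w - c * f z - c * l * (w - z))%C with (c * (f w - f z - l * (w - z)))%C by ring.
    rewrite Cmod_mult. pose proof (Cmod_ge_0 (w - z)).
    apply Rle_trans with (Cmod c * (eps / (Cmod c + 1) * Cmod (w - z))). apply Rmult_le_compat_l; lra.
    assert (eps / (Cmod c + 1) * Cmod c <= eps). { apply Rmult_le_reg_r with (Cmod c + 1). lra. field_simplify; nra. }
    nra.
  - apply Hf. apply Rdiv_lt_0_compat; lra.
Qed.

Lemma CD_opp f z l : CD f z l -> CD (fun w => - f w)%C z (- l)%C.
Proof.
  intros H eps He. destruct (H eps He) as [d [Hd K]]. exists d. split; auto. intros w Hw.
  specialize (K w Hw). replace (- f w - - f z - - l * (w - z))%C with (- (f w - f z - l * (w - z)))%C by ring.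
  rewrite Cmod_opp. exact K.
Qed.

Lemma CD_minus f g z lf lg : CD f z lf -> CD g z lg -> CD (fun w => f w - g w)%C z (lf - lg)%C.
Proof. intros Hf Hg. apply CD_opp in Hg. exact (CD_plus _ _ _ _ _ Hf Hg). Qed.

Lemma CD_mult f g z lf lg : CD f z lf -> CD g z lg -> CD (fun w => f w * g w)%C z (lf * g z + f z * lg)%C.
Proof.
  intros Hf Hg. apply CD_near. intros eps He.
  pose proof (Cmod_ge_0 lf). pose proof (Cmod_ge_0 (f z)). pose proof (Cmod_ge_0 (g z)).
  set (e1 := eps / 3 / (Cmod (g z) + 1)). set (e2 := eps / 3 / (Cmod lf + 1)). set (e3 := eps / 3 / (Cmod (f z) + 1)).
  assert (P1 : 0 < e1) by (unfold e1; apply Rdiv_lt_0_compat; lra).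
  assert (P2 : 0 < e2) by (unfold e2; apply Rdiv_lt_0_compat; lra).
  assert (P3 : 0 < e3) by (unfold e3; apply Rdiv_lt_0_compat; lra).
  assert (Q1 : e1 * (Cmod (g z) + 1) = eps / 3) by (unfold e1; field; lra).
  assert (Q2 : Cmod lf * e2 <= eps / 3).
  { unfold e2. apply Rmult_le_reg_r with (Cmod lf + 1). lra. field_simplify; nra. }
  assert (Q3 : Cmod (f z) * e3 <= eps / 3).
  { unfold e3. apply Rmult_le_reg_r with (Cmod (f z) + 1). lra. field_simplify; nra. }
  pose proof (CD_cont g z lg Hg) as Cg. rewrite Ccont_near in Cg.
  apply (near_mono z (fun w => (Cmod (f w - f z - lf * (w - z)) <= e1 * Cmod (w - z) /\
     Cmod (g w) <= Cmod (g z) + 1) /\ (Cmod (g w - g z) < e2 /\ Cmod (g w - g z - lg * (w - z)) <= e3 * Cmod (w - z)))).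
  - intros w [[J1 J2] [J3 J4]]. pose proof (Cmod_ge_0 (w - z)).
    replace (f w * g w - f z * g z - (lf * g z + f z * lg) * (w - z))%C with
      ((f w - f z - lf * (w - z)) * g w + lf * (w - z) * (g w - g z) + f z * (g w - g z - lg * (w - z)))%C by ring.
    eapply Rle_trans. apply Cmod_tri3. rewrite !Cmod_mult.
    pose proof (Cmod_ge_0 (g w)). pose proof (Cmod_ge_0 (g w - g z)). pose proof (Cmod_ge_0 (f w - f z - lf * (w - z))).
    assert (A1 : Cmod (f w - f z - lf * (w - z)) * Cmod (g w) <= eps / 3 * Cmod (w - z)).
    { apply Rle_trans with (e1 * Cmod (w - z) * (Cmod (g z) + 1)). apply Rmult_le_compat; lra.
      rewrite <- Q1. lra. }
    assert (A2 : Cmod lf * Cmod (w - z) * Cmod (g w - g z) <= eps / 3 * Cmod (w - z)).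
    { apply Rle_trans with (Cmod lf * e2 * Cmod (w - z)). 
      replace (Cmod lf * Cmod (w - z) * Cmod (g w - g z)) with (Cmod lf * Cmod (g w - g z) * Cmod (w - z)) by ring.
      apply Rmult_le_compat_r; [lra|]. apply Rmult_le_compat_l; lra. apply Rmult_le_compat_r; lra. }
    assert (A3 : Cmod (f z) * Cmod (g w - g z - lg * (w - z)) <= eps / 3 * Cmod (w - z)).
    { apply Rle_trans with (Cmod (f z) * (e3 * Cmod (w - z))). apply Rmult_le_compat_l; lra. nra. }
    lra.
  - apply near_and; apply near_and.
    apply Hf; lra. apply Ccont_bound. eapply CD_cont; eauto. apply Cg; lra. apply Hg; lra.
Qed.

Lemma CD_local f g z l : near z (fun w => f w = g w) -> CD f z l -> CD g z l.
Proof.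
  intros Hn Hf. apply CD_near. intros eps He.
  assert (Hz : f z = g z). { destruct Hn as [d [Hd K]]. apply K. replace (z - z)%C with (RtoC 0) by ring. rewrite Cmod_0. lra. }
  apply (near_mono z (fun w => f w = g w /\ Cmod (f w - f z - l * (w - z)) <= eps * Cmod (w - z))).
  - intros w [E H]. rewrite <- E, <- Hz. exact H.
  - apply near_and. exact Hn. apply Hf; lra.
Qed.

Lemma Ccont_local f g z : near z (fun w => f w = g w) -> Ccont f z -> Ccont g z.
Proof.
  intros Hn Hf. apply Ccont_near. intros eps He.
  assert (Hz : f z = g z). { destruct Hn as [d [Hd K]]. apply K. replace (z - z)%C with (RtoC 0) by ring. rewrite Cmod_0. lra. }
  apply (near_mono z (fun w => f w = g w /\ Cmod (f w - f z) < eps)).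
  - intros w [E H]. rewrite <- E, <- Hz. exact H.
  - apply near_and. exact Hn. apply Hf; lra.
Qed.

Lemma Ccont_plus f g z : Ccont f z -> Ccont g z -> Ccont (fun w => f w + g w)%C z.
Proof.
  intros Hf Hg. apply Ccont_near. intros eps He.
  apply (near_mono z (fun w => Cmod (f w - f z) < eps/2 /\ Cmod (g w - g z) < eps/2)).
  - intros w [H1 H2]. replace (f w + g w - (f z + g z))%C with ((f w - f z) + (g w - g z))%C by ring.
    eapply Rle_lt_trans. apply Cmod_triangle. lra.
  - apply near_and; [apply Hf|apply Hg]; lra.
Qed.

Lemma Ccont_mult f g z : Ccont f z -> Ccont g z -> Ccont (fun w => f w * g w)%C z.
Proof.
  intros Hf Hg. apply Ccont_near. intros eps He.
  pose proof (Cmod_ge_0 (f z)). pose proof (Cmod_ge_0 (g z)).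
  set (e1 := eps / 2 / (Cmod (g z) + 1)). set (e2 := eps / 2 / (Cmod (f z) + 1)).
  assert (P1 : 0 < e1) by (unfold e1; apply Rdiv_lt_0_compat; lra).
  assert (P2 : 0 < e2) by (unfold e2; apply Rdiv_lt_0_compat; lra).
  assert (Q1 : e1 * (Cmod (g z) + 1) = eps / 2) by (unfold e1; field; lra).
  assert (Q2 : Cmod (f z) * e2 < eps / 2 + 0).
  { unfold e2. apply Rmult_lt_reg_r with (Cmod (f z) + 1). lra. field_simplify; nra. }
  apply (near_mono z (fun w => (Cmod (f w - f z) < e1 /\ Cmod (g w) <= Cmod (g z) + 1) /\ Cmod (g w - g z) < e2)).
  - intros w [[H1 H2] H3]. replace (f w * g w - f z * g z)%C with ((f w - f z) * g w + f z * (g w - g z))%C by ring.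
    eapply Rle_lt_trans. apply Cmod_triangle. rewrite !Cmod_mult.
    pose proof (Cmod_ge_0 (g w)). pose proof (Cmod_ge_0 (f w - f z)). pose proof (Cmod_ge_0 (g w - g z)).
    assert (Cmod (f w - f z) * Cmod (g w) <= e1 * (Cmod (g z) + 1)) by (apply Rmult_le_compat; lra).
    assert (Cmod (f z) * Cmod (g w - g z) <= Cmod (f z) * e2) by (apply Rmult_le_compat_l; lra).
    assert (Cmod (f w - f z) * Cmod (g w) < e1 * (Cmod (g z) + 1) \/ Cmod (f z) * Cmod (g w - g z) < Cmod (f z) * e2 \/ True) by tauto.
    destruct (Req_dec (Cmod (g w)) 0) as [E|E].
    + rewrite E. nra.
    + assert (Cmod (f w - f z) * Cmod (g w) < e1 * (Cmod (g z) + 1)).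
      { apply Rle_lt_trans with (Cmod (f w - f z) * (Cmod (g z) + 1)). apply Rmult_le_compat_l; lra.
        apply Rmult_lt_compat_r; lra. }
      lra.
  - apply near_and; [apply near_and|]. apply Hf; lra. apply Ccont_bound; auto. apply Hg; lra.
Qed.

Lemma Ccont_const c z : Ccont (fun _ => c) z.
Proof. apply Ccont_near. intros eps He. exists 1. split. lra. intros w _. replace (c - c)%C with (RtoC 0) by ring. rewrite Cmod_0. lra. Qed.

Lemma Ccont_id z : Ccont (fun w => w) z.
Proof. intros eps He. exists eps. split; auto. Qed.

Lemma Ccont_opp f z : Ccont f z -> Ccont (fun w => - f w)%C z.
Proof. intros H eps He. destruct (H eps He) as [d [Hd K]]. exists d. split; auto. intros w Hw.
  replace (- f w - - f z)%C with (- (f w - f z))%C by ring. rewrite Cmod_opp. auto. Qed.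

Lemma Ccont_minus f g z : Ccont f z -> Ccont g z -> Ccont (fun w => f w - g w)%C z.
Proof. intros Hf Hg. apply Ccont_opp in Hg. exact (Ccont_plus _ _ _ Hf Hg). Qed.


Definition CInt (f : R -> C) (a b : R) : C :=
  (RInt (fun t => Re (f t)) a b, RInt (fun t => Im (f t)) a b).

Definition rcont (f : R -> C) (t : R) : Prop :=
  forall eps, 0 < eps -> exists del, 0 < del /\ forall s, Rabs (s - t) < del -> Cmod (f s - f t) < eps.

Definition RCont (f : R -> C) (a b : R) : Prop :=
  forall t, Rmin a b <= t <= Rmax a b -> rcont f t.

Lemma rcont_re f t : rcont f t -> continuous (fun s => Re (f s)) t.
Proof.
  intros H. apply continuity_pt_filterlim. intros eps He. destruct (H eps He) as [d [Hd K]].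
  exists d. split; auto. intros s [_ Hs]. simpl in Hs. unfold R_dist in *.
  specialize (K s Hs). simpl. unfold R_dist. eapply Rle_lt_trans; [|exact K].
  eapply Rle_trans; [|apply re_le_Cmod]. right. f_equal.
Qed.

Lemma rcont_im f t : rcont f t -> continuous (fun s => Im (f s)) t.
Proof.
  intros H. apply continuity_pt_filterlim. intros eps He. destruct (H eps He) as [d [Hd K]].
  exists d. split; auto. intros s [_ Hs]. simpl in Hs. unfold R_dist in *.
  specialize (K s Hs). simpl. unfold R_dist. eapply Rle_lt_trans; [|exact K].
  eapply Rle_trans; [|apply im_le_Cmod]. right. f_equal.
Qed.

Lemma RCont_re f a b : RCont f a b -> ex_RInt (fun t => Re (f t)) a b.
Proof. intros H. apply (ex_RInt_continuous (V:=R_CompleteNormedModule)). intros z Hz. apply rcont_re. apply H. exact Hz. Qed.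
Lemma RCont_im f a b : RCont f a b -> ex_RInt (fun t => Im (f t)) a b.
Proof. intros H. apply (ex_RInt_continuous (V:=R_CompleteNormedModule)). intros z Hz. apply rcont_im. apply H. exact Hz. Qed.

Lemma RCont_sub f a b c d : RCont f a b -> Rmin a b <= Rmin c d -> Rmax c d <= Rmax a b -> RCont f c d.
Proof. intros H H1 H2 t Ht. apply H. lra. Qed.

Lemma RCont_swap f a b : RCont f a b -> RCont f b a.
Proof. intros H t Ht. apply H. rewrite Rmin_comm, Rmax_comm. exact Ht. Qed.

Lemma rcont_plus f g t : rcont f t -> rcont g t -> rcont (fun s => f s + g s)%C t.
Proof.
  intros Hf Hg eps He. destruct (Hf (eps/2)) as [d1 [Hd1 K1]]; [lra|]. destruct (Hg (eps/2)) as [d2 [Hd2 K2]]; [lra|].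
  exists (Rmin d1 d2). split. unfold Rmin; destruct Rle_dec; lra. intros s Hs.
  pose proof (Rmin_l d1 d2). pose proof (Rmin_r d1 d2).
  replace (f s + g s - (f t + g t))%C with ((f s - f t) + (g s - g t))%C by ring.
  eapply Rle_lt_trans. apply Cmod_triangle. specialize (K1 s ltac:(lra)). specialize (K2 s ltac:(lra)). lra.
Qed.

Lemma rcont_comp (k : C -> C) (g : R -> C) t : rcont g t -> Ccont k (g t) -> rcont (fun s => k (g s)) t.
Proof.
  intros Hg Hk eps He. destruct (Hk eps He) as [d1 [Hd1 K1]]. destruct (Hg d1 Hd1) as [d2 [Hd2 K2]].
  exists d2. split; [exact Hd2|]. intros s Hs. apply K1. apply K2. exact Hs.
Qed.

Lemma rcont_const c t : rcont (fun _ => c) t.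
Proof. intros eps He. exists 1. split. lra. intros. replace (c - c)%C with (RtoC 0) by ring. rewrite Cmod_0. lra. Qed.

Lemma rcont_mult f g t : rcont f t -> rcont g t -> rcont (fun s => f s * g s)%C t.
Proof.
  intros Hf Hg.
  set (F := fun w : C => (f (Re w) * g (Re w))%C).
  assert (Cf : Ccont (fun w => f (Re w)) (RtoC t)).
  { intros eps He. destruct (Hf eps He) as [d [Hd K]]. exists d. split; auto. intros w Hw. simpl. apply K.
    eapply Rle_lt_trans; [|exact Hw]. replace (Re w - t) with (Re (w - RtoC t)) by (destruct w; simpl; ring). apply re_le_Cmod. }
  assert (Cg : Ccont (fun w => g (Re w)) (RtoC t)).
  { intros eps He. destruct (Hg eps He) as [d [Hd K]]. exists d. split; auto. intros w Hw. simpl. apply K.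
    eapply Rle_lt_trans; [|exact Hw]. replace (Re w - t) with (Re (w - RtoC t)) by (destruct w; simpl; ring). apply re_le_Cmod. }
  pose proof (Ccont_mult _ _ _ Cf Cg) as Cm.
  intros eps He. destruct (Cm eps He) as [d [Hd K]]. exists d. split; auto. intros s Hs.
  specialize (K (RtoC s)). simpl in K. apply K.
  replace (RtoC s - RtoC t)%C with (RtoC (s - t)). rewrite Cmod_R. exact Hs.
  unfold RtoC, Cminus, Cplus, Copp; simpl. f_equal; ring.
Qed.

Lemma CInt_plus f g a b : RCont f a b -> RCont g a b -> CInt (fun t => f t + g t)%C a b = (CInt f a b + CInt g a b)%C.
Proof.
  intros Hf Hg. unfold CInt.
  pose proof (RInt_plus (V:=R_CompleteNormedModule) (fun t => Re (f t)) (fun t => Re (g t)) a b (RCont_re _ _ _ Hf) (RCont_re _ _ _ Hg)) as E1.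
  pose proof (RInt_plus (V:=R_CompleteNormedModule) (fun t => Im (f t)) (fun t => Im (g t)) a b (RCont_im _ _ _ Hf) (RCont_im _ _ _ Hg)) as E2.
  unfold Cplus. simpl. f_equal; [exact E1|exact E2].
Qed.

Lemma ex_re_scal f a b (k : R) : RCont f a b -> ex_RInt (fun t => k * Re (f t)) a b.
Proof. intros H. apply (ex_RInt_scal (V:=R_CompleteNormedModule) (fun t => Re (f t))). apply RCont_re; auto. Qed.
Lemma ex_im_scal f a b (k : R) : RCont f a b -> ex_RInt (fun t => k * Im (f t)) a b.
Proof. intros H. apply (ex_RInt_scal (V:=R_CompleteNormedModule) (fun t => Im (f t))). apply RCont_im; auto. Qed.

Lemma CInt_scal (c : C) f a b : RCont f a b -> CInt (fun t => c * f t)%C a b = (c * CInt f a b)%C.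
Proof.
  intros Hf. unfold CInt. destruct c as [cr ci].
  pose proof (RInt_minus (V:=R_CompleteNormedModule) (fun t => cr * Re (f t)) (fun t => ci * Im (f t)) a b (ex_re_scal _ _ _ _ Hf) (ex_im_scal _ _ _ _ Hf)) as E1.
  pose proof (RInt_plus (V:=R_CompleteNormedModule) (fun t => cr * Im (f t)) (fun t => ci * Re (f t)) a b (ex_im_scal _ _ _ _ Hf) (ex_re_scal _ _ _ _ Hf)) as E2.
  pose proof (RInt_scal (V:=R_CompleteNormedModule) (fun t => Re (f t)) a b cr (RCont_re _ _ _ Hf)) as S1.
  pose proof (RInt_scal (V:=R_CompleteNormedModule) (fun t => Im (f t)) a b ci (RCont_im _ _ _ Hf)) as S2.
  pose proof (RInt_scal (V:=R_CompleteNormedModule) (fun t => Im (f t)) a b cr (RCont_im _ _ _ Hf)) as S3.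
  pose proof (RInt_scal (V:=R_CompleteNormedModule) (fun t => Re (f t)) a b ci (RCont_re _ _ _ Hf)) as S4.
  simpl in E1, E2, S1, S2, S3, S4. unfold minus, plus, opp, scal in E1, E2, S1, S2, S3, S4. simpl in E1, E2, S1, S2, S3, S4.
  unfold mult in S1, S2, S3, S4. simpl in S1, S2, S3, S4.
  unfold Cmult. simpl. f_equal.
  - transitivity (RInt (fun x : R => cr * Re (f x) + - (ci * Im (f x))) a b).
    apply RInt_ext; intros; reflexivity. rewrite E1, S1, S2. unfold Rminus. reflexivity.
  - transitivity (RInt (fun x : R => cr * Im (f x) + ci * Re (f x)) a b).
    apply (RInt_ext (V:=R_CompleteNormedModule)); intros; reflexivity. rewrite E2, S3, S4. reflexivity.
Qed.

Lemma CInt_ext f g a b : (forall t, Rmin a b <= t <= Rmax a b -> f t = g t) -> CInt f a b = CInt g a b.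
Proof.
  intros H. unfold CInt. f_equal; apply RInt_ext; intros x Hx; rewrite H; auto; lra.
Qed.

Lemma CInt_Chasles f a b c : RCont f a b -> RCont f b c -> (CInt f a b + CInt f b c)%C = CInt f a c.
Proof.
  intros H1 H2. unfold CInt, Cplus. simpl. f_equal.
  exact (RInt_Chasles (V:=R_CompleteNormedModule) _ a b c (RCont_re _ _ _ H1) (RCont_re _ _ _ H2)).
  exact (RInt_Chasles (V:=R_CompleteNormedModule) _ a b c (RCont_im _ _ _ H1) (RCont_im _ _ _ H2)).
Qed.

Lemma CInt_swap f a b : RCont f a b -> CInt f b a = (- CInt f a b)%C.
Proof.
  intros H. unfold CInt, Copp. simpl. f_equal.
  symmetry. exact (opp_RInt_swap (V:=R_CompleteNormedModule) _ a b (RCont_re _ _ _ H)).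
  symmetry. exact (opp_RInt_swap (V:=R_CompleteNormedModule) _ a b (RCont_im _ _ _ H)).
Qed.

Lemma CInt_point f a : CInt f a a = RtoC 0.
Proof. unfold CInt, RtoC. f_equal; exact (RInt_point (V:=R_CompleteNormedModule) a _). Qed.

Lemma CInt_const c a b : CInt (fun _ => c) a b = (c * RtoC (b - a))%C.
Proof.
  unfold CInt. rewrite !(RInt_const (V:=R_CompleteNormedModule)). unfold Cmult, RtoC; simpl.
  unfold scal; simpl. unfold mult; simpl. f_equal; destruct c; simpl; ring.
Qed.

Lemma CInt_comp_lin f (u v a b : R) : RCont f (u * a + v) (u * b + v) ->
  CInt (fun y => Cmult (RtoC u) (f (u * y + v)%R)) a b = CInt f (u * a + v) (u * b + v).
Proof.
  intros H. unfold CInt. f_equal.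
  - rewrite <- (RInt_comp_lin (V:=R_CompleteNormedModule) (fun t => Re (f t)) u v a b) by (apply RCont_re; auto).
    apply (RInt_ext (V:=R_CompleteNormedModule)). intros x _.
    assert (E : forall z : C, Re (RtoC u * z)%C = u * Re z) by (intros [z1 z2]; simpl; ring).
    rewrite E. reflexivity.
  - rewrite <- (RInt_comp_lin (V:=R_CompleteNormedModule) (fun t => Im (f t)) u v a b) by (apply RCont_im; auto).
    apply (RInt_ext (V:=R_CompleteNormedModule)). intros x _.
    assert (E : forall z : C, Im (RtoC u * z)%C = u * Im z) by (intros [z1 z2]; simpl; ring).
    rewrite E. reflexivity.
Qed.

Lemma CInt_bound f a b M : a <= b -> RCont f a b -> (forall t, a <= t <= b -> Cmod (f t) <= M) ->
  Cmod (CInt f a b) <= 2 * (b - a) * M.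
Proof.
  intros Hab Hc HM.
  pose proof (abs_RInt_le_const (fun t => Re (f t)) a b M Hab (RCont_re _ _ _ Hc)) as A1.
  pose proof (abs_RInt_le_const (fun t => Im (f t)) a b M Hab (RCont_im _ _ _ Hc)) as A2.
  assert (B1 : Rabs (RInt (fun t => Re (f t)) a b) <= (b - a) * M).
  { apply A1. intros t Ht. eapply Rle_trans. apply re_le_Cmod. apply HM; lra. }
  assert (B2 : Rabs (RInt (fun t => Im (f t)) a b) <= (b - a) * M).
  { apply A2. intros t Ht. eapply Rle_trans. apply im_le_Cmod. apply HM; lra. }
  eapply Rle_trans. apply Cmod_le_sum. unfold CInt. simpl. lra.
Qed.

Definition RD (F : R -> C) (t : R) (l : C) : Prop :=
  forall eps, 0 < eps -> exists del, 0 < del /\ forall h, Rabs h < del -> Cmod (F (t + h)%R - F t - RtoC h * l) <= eps * Rabs h.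

Lemma RD_re F t l : RD F t l -> is_derive (fun s => Re (F s)) t (Re l).
Proof.
  intros H. apply is_derive_Reals. intros eps He.
  destruct (H (eps/2)) as [d [Hd K]]; [lra|].
  exists (mkposreal d Hd). intros h Hh0 Hh. simpl in Hh. specialize (K h Hh).
  assert (E : Re (F (t + h)%R - F t - RtoC h * l)%C = Re (F (t + h)) - Re (F t) - h * Re l) by (destruct (F (t+h)), (F t), l; simpl; ring).
  assert (A : Rabs (Re (F (t + h)) - Re (F t) - h * Re l) <= eps / 2 * Rabs h).
  { rewrite <- E. eapply Rle_trans. apply re_le_Cmod. exact K. }
  replace ((Re (F (t + h)) - Re (F t)) / h - Re l) with ((Re (F (t + h)) - Re (F t) - h * Re l) / h) by (field; auto).
  unfold Rdiv. rewrite Rabs_mult, Rabs_inv. 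
  assert (0 < Rabs h) by (apply Rabs_pos_lt; auto).
  apply Rmult_le_compat_r with (r := / Rabs h) in A; [|left; apply Rinv_0_lt_compat; auto].
  replace (eps / 2 * Rabs h * / Rabs h) with (eps / 2) in A by (field; lra). lra.
Qed.

Lemma RD_im F t l : RD F t l -> is_derive (fun s => Im (F s)) t (Im l).
Proof.
  intros H. apply is_derive_Reals. intros eps He.
  destruct (H (eps/2)) as [d [Hd K]]; [lra|].
  exists (mkposreal d Hd). intros h Hh0 Hh. simpl in Hh. specialize (K h Hh).
  assert (E : Im (F (t + h)%R - F t - RtoC h * l)%C = Im (F (t + h)) - Im (F t) - h * Im l) by (destruct (F (t+h)), (F t), l; simpl; ring).
  assert (A : Rabs (Im (F (t + h)) - Im (F t) - h * Im l) <= eps / 2 * Rabs h).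
  { rewrite <- E. eapply Rle_trans. apply im_le_Cmod. exact K. }
  replace ((Im (F (t + h)) - Im (F t)) / h - Im l) with ((Im (F (t + h)) - Im (F t) - h * Im l) / h) by (field; auto).
  unfold Rdiv. rewrite Rabs_mult, Rabs_inv. 
  assert (0 < Rabs h) by (apply Rabs_pos_lt; auto).
  apply Rmult_le_compat_r with (r := / Rabs h) in A; [|left; apply Rinv_0_lt_compat; auto].
  replace (eps / 2 * Rabs h * / Rabs h) with (eps / 2) in A by (field; lra). lra.
Qed.

Lemma CInt_FTC F f a b : (forall t, Rmin a b <= t <= Rmax a b -> RD F t (f t)) -> RCont f a b ->
  CInt f a b = (F b - F a)%C.
Proof.
  intros HD Hc. unfold CInt.
  assert (E1 : RInt (fun t => Re (f t)) a b = Re (F b) - Re (F a)).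
  { apply is_RInt_unique. apply (is_RInt_derive (V:=R_CompleteNormedModule) (fun s => Re (F s))).
    intros x Hx. apply RD_re. apply HD; auto. intros x Hx. apply rcont_re. apply Hc; auto. }
  assert (E2 : RInt (fun t => Im (f t)) a b = Im (F b) - Im (F a)).
  { apply is_RInt_unique. apply (is_RInt_derive (V:=R_CompleteNormedModule) (fun s => Im (F s))).
    intros x Hx. apply RD_im. apply HD; auto. intros x Hx. apply rcont_im. apply Hc; auto. }
  rewrite E1, E2. destruct (F b), (F a); unfold Cminus, Cplus, Copp; simpl. f_equal; ring.
Qed.


Definition Seg (k : C -> C) (a b : C) : C :=
  ((b - a) * CInt (fun t => k (a + RtoC t * (b - a))%C) 0 1)%C.

Definition SegCont (k : C -> C) (a b : C) : Prop :=
  forall s, 0 <= s <= 1 -> Ccont k (a + RtoC s * (b - a))%C.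

Lemma RtoC_sub_mult (t s : R) (d : C) : (RtoC t * d - RtoC s * d)%C = (RtoC (t - s) * d)%C.
Proof. destruct d. unfold RtoC, Cmult, Cminus, Cplus, Copp; simpl. f_equal; ring. Qed.

Lemma param_rcont k (a d : C) s : Ccont k (a + RtoC s * d)%C -> rcont (fun t => k (a + RtoC t * d)%C) s.
Proof.
  intros H eps He. destruct (H eps He) as [del [Hdel K]].
  pose proof (Cmod_ge_0 d).
  exists (del / (Cmod d + 1)). split. apply Rdiv_lt_0_compat; lra.
  intros t Ht. apply K.
  replace (a + RtoC t * d - (a + RtoC s * d))%C with (RtoC t * d - RtoC s * d)%C by ring.
  rewrite RtoC_sub_mult, Cmod_mult, Cmod_R.
  apply Rle_lt_trans with (Rabs (t - s) * (Cmod d + 1)). apply Rmult_le_compat_l. apply Rabs_pos. lra.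
  apply Rmult_lt_reg_r with (/ (Cmod d + 1)). apply Rinv_0_lt_compat; lra.
  replace (Rabs (t - s) * (Cmod d + 1) * / (Cmod d + 1)) with (Rabs (t - s)) by (field; lra). exact Ht.
Qed.

Lemma rcont_lin (G : R -> C) (u v t : R) : rcont G (u * t + v) -> rcont (fun y => G (u * y + v)) t.
Proof.
  intros H eps He. destruct (H eps He) as [del [Hdel K]].
  exists (del / (Rabs u + 1)). split. apply Rdiv_lt_0_compat. lra. pose proof (Rabs_pos u); lra.
  intros s Hs. apply K. replace (u * s + v - (u * t + v)) with (u * (s - t)) by ring.
  rewrite Rabs_mult. pose proof (Rabs_pos u). pose proof (Rabs_pos (s - t)).
  apply Rle_lt_trans with ((Rabs u + 1) * Rabs (s - t)). nra.
  apply Rmult_lt_reg_r with (/ (Rabs u + 1)). apply Rinv_0_lt_compat; lra.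
  replace ((Rabs u + 1) * Rabs (s - t) * / (Rabs u + 1)) with (Rabs (s - t)) by (field; lra). exact Hs.
Qed.

Lemma Cmult_swap3 (x y z : C) : (x * y * z = y * (x * z))%C.
Proof. ring. Qed.

Lemma SegParam k (a d : C) (al be : R) x y :
  x = (a + RtoC al * d)%C -> y = (a + RtoC be * d)%C ->
  (forall s, Rmin al be <= s <= Rmax al be -> Ccont k (a + RtoC s * d)%C) ->
  Seg k x y = (d * CInt (fun s => k (a + RtoC s * d)%C) al be)%C.
Proof.
  intros Hx Hy Hc. unfold Seg. subst x y.
  set (G := fun s : R => k (a + RtoC s * d)%C).
  assert (HG : RCont G al be). { intros s Hs. apply param_rcont. apply Hc; auto. }
  assert (E1 : CInt (fun t => k (a + RtoC al * d + RtoC t * (a + RtoC be * d - (a + RtoC al * d)))%C) 0 1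
             = CInt (fun t => G ((be - al) * t + al)%R) 0 1).
  { apply CInt_ext. intros t _. unfold G. f_equal. destruct d, a. unfold RtoC, Cmult, Cplus, Cminus, Copp; simpl. f_equal; ring. }
  rewrite E1.
  assert (HG' : RCont (fun t => G ((be - al) * t + al)%R) 0 1).
  { intros t Ht. apply rcont_lin. apply HG. rewrite Rmin_left in Ht by lra. rewrite Rmax_right in Ht by lra.
    destruct (Rle_dec al be).
    - rewrite Rmin_left, Rmax_right by lra. split; nra.
    - rewrite Rmin_right, Rmax_left by lra. split; nra. }
  assert (E2 : (RtoC (be - al) * CInt (fun t => G ((be - al) * t + al)%R) 0 1)%C = CInt G al be).
  { rewrite <- CInt_scal by exact HG'.
    assert (Q0 : (be - al) * 0 + al = al) by ring. assert (Q1 : (be - al) * 1 + al = be) by ring.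
    pose proof (CInt_comp_lin G (be - al) al 0 1) as C1. rewrite Q0, Q1 in C1. apply C1. exact HG. }
  replace (a + RtoC be * d - (a + RtoC al * d))%C with (RtoC (be - al) * d)%C.
  rewrite <- E2. apply Cmult_swap3. destruct d, a. unfold RtoC, Cmult, Cplus, Cminus, Copp; simpl. unfold Cplus; simpl. f_equal; ring.
Qed.

Lemma SegCont_RCont k a b : SegCont k a b -> RCont (fun t => k (a + RtoC t * (b - a))%C) 0 1.
Proof. intros H t Ht. rewrite Rmin_left, Rmax_right in Ht by lra. apply param_rcont. apply H. exact Ht. Qed.

Lemma C_add0 (a d : C) : a = (a + RtoC 0 * d)%C.
Proof. destruct a, d. unfold RtoC, Cmult, Cplus; simpl. f_equal; ring. Qed.
Lemma C_add1 (a b : C) : b = (a + RtoC 1 * (b - a))%C.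
Proof. destruct a, b. unfold RtoC, Cmult, Cplus, Cminus, Copp; simpl. unfold Cplus; simpl. f_equal; ring. Qed.

Lemma Seg_split k a b (l : R) : 0 <= l <= 1 -> SegCont k a b ->
  Seg k a b = (Seg k a (a + RtoC l * (b - a)) + Seg k (a + RtoC l * (b - a)) b)%C.
Proof.
  intros Hl H.
  assert (Hc : forall s, Rmin 0 1 <= s <= Rmax 0 1 -> Ccont k (a + RtoC s * (b - a))%C).
  { intros s Hs. rewrite Rmin_left, Rmax_right in Hs by lra. apply H; auto. }
  rewrite (SegParam k a (b - a) 0 1 a b (C_add0 a (b - a)) (C_add1 a b) Hc).
  assert (Hc1 : forall s, Rmin 0 l <= s <= Rmax 0 l -> Ccont k (a + RtoC s * (b - a))%C).
  { intros s Hs. rewrite Rmin_left, Rmax_right in Hs by lra. apply H; lra. }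
  assert (Hc2 : forall s, Rmin l 1 <= s <= Rmax l 1 -> Ccont k (a + RtoC s * (b - a))%C).
  { intros s Hs. rewrite Rmin_left, Rmax_right in Hs by lra. apply H; lra. }
  rewrite (SegParam k a (b - a) 0 l a _ (C_add0 a (b - a)) eq_refl Hc1).
  rewrite (SegParam k a (b - a) l 1 _ b eq_refl (C_add1 a b) Hc2).
  rewrite <- Cmult_plus_distr_l. f_equal. symmetry. apply CInt_Chasles.
  intros s Hs. apply param_rcont. apply Hc1; auto.
  intros s Hs. apply param_rcont. apply Hc2; auto.
Qed.

Lemma Seg_rev k a b : SegCont k a b -> Seg k b a = (- Seg k a b)%C.
Proof.
  intros H.
  assert (Hc : forall s, Rmin 0 1 <= s <= Rmax 0 1 -> Ccont k (a + RtoC s * (b - a))%C).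
  { intros s Hs. rewrite Rmin_left, Rmax_right in Hs by lra. apply H; auto. }
  assert (Hc' : forall s, Rmin 1 0 <= s <= Rmax 1 0 -> Ccont k (a + RtoC s * (b - a))%C).
  { intros s Hs. rewrite Rmin_right, Rmax_left in Hs by lra. apply H; auto. }
  rewrite (SegParam k a (b - a) 0 1 a b (C_add0 a (b - a)) (C_add1 a b) Hc).
  rewrite (SegParam k a (b - a) 1 0 b a (C_add1 a b) (C_add0 a (b - a)) Hc').
  rewrite CInt_swap. ring. intros s Hs. apply param_rcont. apply Hc; auto.
Qed.

Lemma Seg_const c a b : Seg (fun _ => c) a b = (c * (b - a))%C.
Proof. unfold Seg. rewrite CInt_const. replace (RtoC (1 - 0)) with (RtoC 1) by (f_equal; ring). ring. Qed.

Lemma SegCont_const c a b : SegCont (fun _ => c) a b.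
Proof. intros s _. apply Ccont_const. Qed.

Lemma SegCont_plus k1 k2 a b : SegCont k1 a b -> SegCont k2 a b -> SegCont (fun w => k1 w + k2 w)%C a b.
Proof. intros H1 H2 s Hs. apply Ccont_plus; auto. Qed.

Lemma Seg_plus k1 k2 a b : SegCont k1 a b -> SegCont k2 a b -> Seg (fun w => k1 w + k2 w)%C a b = (Seg k1 a b + Seg k2 a b)%C.
Proof.
  intros H1 H2. unfold Seg. rewrite (CInt_plus (fun t => k1 (a + RtoC t * (b - a))%C) (fun t => k2 (a + RtoC t * (b - a))%C)).
  ring. apply SegCont_RCont; auto. apply SegCont_RCont; auto.
Qed.

Lemma Seg_scal c k a b : SegCont k a b -> Seg (fun w => c * k w)%C a b = (c * Seg k a b)%C.
Proof.
  intros H. unfold Seg. rewrite (CInt_scal c (fun t => k (a + RtoC t * (b - a))%C)). ring. apply SegCont_RCont; auto.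
Qed.

Lemma Seg_opp k a b : SegCont k a b -> Seg (fun w => - k w)%C a b = (- Seg k a b)%C.
Proof.
  intros H. transitivity (Seg (fun w => RtoC (-1) * k w)%C a b).
  unfold Seg. f_equal. apply CInt_ext. intros. destruct (k _). unfold RtoC, Cmult, Copp; simpl. f_equal; ring.
  rewrite Seg_scal by auto. destruct (Seg k a b). unfold RtoC, Cmult, Copp; simpl. f_equal; ring.
Qed.

Lemma Seg_minus k1 k2 a b : SegCont k1 a b -> SegCont k2 a b -> Seg (fun w => k1 w - k2 w)%C a b = (Seg k1 a b - Seg k2 a b)%C.
Proof.
  intros H1 H2. unfold Cminus at 1. rewrite Seg_plus. rewrite Seg_opp by auto. reflexivity. auto.
  intros s Hs. apply Ccont_opp. auto.
Qed.

Lemma Seg_bound k a b M : SegCont k a b -> (forall s, 0 <= s <= 1 -> Cmod (k (a + RtoC s * (b - a))%C) <= M) ->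
  Cmod (Seg k a b) <= 2 * Cmod (b - a) * M.
Proof.
  intros H HM. unfold Seg. rewrite Cmod_mult.
  pose proof (CInt_bound (fun t => k (a + RtoC t * (b - a))%C) 0 1 M ltac:(lra) (SegCont_RCont _ _ _ H) HM).
  pose proof (Cmod_ge_0 (b - a)). replace (2 * Cmod (b - a) * M) with (Cmod (b - a) * (2 * (1 - 0) * M)) by ring.
  apply Rmult_le_compat_l; auto.
Qed.

Lemma RD_affine (p q : C) (t : R) : RD (fun s => (p * RtoC s + q * RtoC (s * s / 2)))%C t (p + q * RtoC t)%C.
Proof.
  intros eps He. pose proof (Cmod_ge_0 q).
  exists (2 * eps / (Cmod q + 1)). split. apply Rdiv_lt_0_compat; lra.
  intros h Hh.
  replace (p * RtoC (t + h) + q * RtoC ((t + h) * (t + h) / 2) - (p * RtoC t + q * RtoC (t * t / 2)) - RtoC h * (p + q * RtoC t))%C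
    with (q * RtoC (h * h / 2))%C.
  rewrite Cmod_mult, Cmod_R. pose proof (Rabs_pos h).
  replace (Rabs (h * h / 2)) with (Rabs h * Rabs h / 2) by (unfold Rdiv; rewrite !Rabs_mult, Rabs_inv, (Rabs_pos_eq 2) by lra; ring).
  assert (Rabs h * (Cmod q + 1) <= 2 * eps).
  { apply Rmult_lt_compat_r with (r := Cmod q + 1) in Hh; [|lra].
    replace (2 * eps / (Cmod q + 1) * (Cmod q + 1)) with (2 * eps) in Hh by (field; lra). lra. }
  nra.
  destruct p, q. unfold RtoC, Cmult, Cplus, Cminus, Copp; simpl. unfold Cplus; simpl. f_equal; field.
Qed.

Lemma Seg_id a b : Seg (fun w => w) a b = ((b * b - a * a) / 2)%C.
Proof.
  unfold Seg.
  rewrite (CInt_FTC (fun s => ((b - a) * RtoC s * (1/2)%R + a * RtoC s + (b - a) * RtoC (s * s / 2) - (b - a) * RtoC s * (1/2)%R))%C).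
  - destruct a, b. unfold RtoC, Cmult, Cplus, Cminus, Copp, Cdiv, Cinv; simpl. unfold Cplus, Cmult; simpl. f_equal; field.
  - intros t Ht.
    pose proof (RD_affine a (b - a) t) as K.
    intros eps He. destruct (K eps He) as [d [Hd K']]. exists d. split; auto. intros h Hh. specialize (K' h Hh).
    eapply Rle_trans; [|exact K']. right. f_equal.
    destruct a, b. unfold RtoC, Cmult, Cplus, Cminus, Copp; simpl. unfold Cplus, Cmult; simpl. f_equal; field.
  - intros t Ht. apply (param_rcont (fun w => w) a (b - a) t). apply Ccont_id.
Qed.


Lemma pow2_ge1 n : 1 <= 2 ^ n.
Proof. apply pow_R1_Rle. lra. Qed.

Lemma INR_le_pow2 n : INR n <= 2 ^ n.
Proof. induction n. simpl; lra. rewrite S_INR. simpl. pose proof (pow2_ge1 n). lra. Qed.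

Lemma exists_nat_gt r : exists n : nat, r < INR n.
Proof.
  destruct (archimed r) as [H1 _].
  destruct (Z_lt_le_dec 0 (up r)) as [Hp|Hn].
  - exists (Z.to_nat (up r)). rewrite INR_IZR_INZ. rewrite Z2Nat.id by lia. lra.
  - exists 0%nat. simpl. apply IZR_le in Hn. lra.
Qed.

Lemma pow2_small (K eps : R) : 0 < eps -> exists N : nat, K / 2 ^ N < eps.
Proof.
  intros He. destruct (exists_nat_gt (K / eps)) as [N HN]. exists N.
  pose proof (INR_le_pow2 N). pose proof (pow2_ge1 N).
  apply Rmult_lt_reg_r with (2 ^ N). lra. unfold Rdiv. rewrite Rmult_assoc, Rinv_l by lra.
  rewrite Rmult_1_r. apply Rmult_lt_compat_r with (r := eps) in HN; [|lra].
  unfold Rdiv in HN. rewrite Rmult_assoc, Rinv_l, Rmult_1_r in HN by lra. nra.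
Qed.

Lemma pow2_S n : 2 ^ S n = 2 * 2 ^ n.
Proof. reflexivity. Qed.

Lemma geo_partial (x : nat -> R) (B : R) : (forall n, Rabs (x (S n) - x n) <= B / 2 ^ n) ->
  forall n k, Rabs (x (n + k)%nat - x n) <= 2 * B / 2 ^ n - 2 * B / 2 ^ (n + k).
Proof.
  intros H n k. induction k.
  - rewrite Nat.add_0_r. replace (x n - x n) with 0 by ring. rewrite Rabs_R0. lra.
  - replace (n + S k)%nat with (S (n + k)) by lia.
    replace (x (S (n + k)) - x n) with ((x (S (n + k)) - x (n + k)%nat) + (x (n + k)%nat - x n)) by ring.
    eapply Rle_trans. apply Rabs_triang. specialize (H (n + k)%nat).
    rewrite pow2_S. pose proof (pow2_ge1 (n + k)).
    replace (2 * B / (2 * 2 ^ (n + k))) with (B / 2 ^ (n + k)) by (field; lra).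
    replace (2 * B / 2 ^ (n + k)) with (B / 2 ^ (n + k) + B / 2 ^ (n + k)) in IHk by (field; lra).
    lra.
Qed.

Lemma geo_limit (x : nat -> R) (B : R) : 0 <= B -> (forall n, Rabs (x (S n) - x n) <= B / 2 ^ n) ->
  exists l, forall n, Rabs (x n - l) <= 2 * B / 2 ^ n.
Proof.
  intros HB H. pose proof (geo_partial x B H) as G.
  assert (G' : forall n m, (n <= m)%nat -> Rabs (x m - x n) <= 2 * B / 2 ^ n).
  { intros n m Hnm. replace m with (n + (m - n))%nat by lia. specialize (G n (m - n)%nat).
    assert (0 <= 2 * B / 2 ^ (n + (m - n))). { apply Rdiv_le_0_compat. lra. pose proof (pow2_ge1 (n + (m - n))). lra. }
    lra. }
  assert (Hc : Cauchy_crit x).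
  { intros eps He. destruct (pow2_small (4 * B) eps He) as [N HN]. exists N. intros n m Hn Hm.
    unfold Rdist. replace (x n - x m) with ((x n - x N) - (x m - x N)) by ring.
    eapply Rle_lt_trans. apply Rabs_triang. rewrite Rabs_Ropp.
    pose proof (G' N n Hn). pose proof (G' N m Hm).
    replace (4 * B / 2 ^ N) with (2 * B / 2 ^ N + 2 * B / 2 ^ N) in HN by (pose proof (pow2_ge1 N); field; lra).
    lra. }
  destruct (Rcomplete.R_complete x Hc) as [l Hl]. exists l. intros n.
  apply Rnot_lt_le. intros Hlt.
  set (e := Rabs (x n - l) - 2 * B / 2 ^ n).
  destruct (Hl e ltac:(unfold e; lra)) as [N HN].
  specialize (HN (max n N) ltac:(lia)). unfold Rdist in HN.
  specialize (G' n (max n N) ltac:(lia)).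
  assert (Rabs (x n - l) <= Rabs (x (max n N) - x n) + Rabs (x (max n N) - l)).
  { replace (x n - l) with (- (x (max n N) - x n) + (x (max n N) - l)) by ring.
    eapply Rle_trans. apply Rabs_triang. rewrite Rabs_Ropp. lra. }
  unfold e in HN. lra.
Qed.


Definition Jt (k : C -> C) (a b c : C) : C := (Seg k a b + Seg k b c + Seg k c a)%C.
Definition Aff (a b c v : C) : C := (a + RtoC (Re v) * (b - a) + RtoC (Im v) * (c - a))%C.
Definition InS (v : C) : Prop := 0 <= Re v /\ 0 <= Im v /\ Re v + Im v <= 1.
Definition half (p q : C) : C := (p + RtoC (1/2) * (q - p))%C.

Lemma Aff_comb a b c p q s : Aff a b c (p + RtoC s * (q - p))%C = (Aff a b c p + RtoC s * (Aff a b c q - Aff a b c p))%C.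
Proof. destruct a, b, c, p, q. unfold Aff, RtoC, Cmult, Cplus, Cminus, Copp; simpl. unfold Cplus, Cmult; simpl. f_equal; ring. Qed.

Lemma InS_comb p q s : InS p -> InS q -> 0 <= s <= 1 -> InS (p + RtoC s * (q - p))%C.
Proof.
  destruct p as [p1 p2], q as [q1 q2]. unfold InS, RtoC, Cmult, Cplus, Cminus, Copp; simpl.
  intros [A1 [A2 A3]] [B1 [B2 B3]] Hs. split; [|split]; nra.
Qed.

Lemma SegCont_Aff k a b c p q : (forall v, InS v -> Ccont k (Aff a b c v)) -> InS p -> InS q ->
  SegCont k (Aff a b c p) (Aff a b c q).
Proof.
  intros H Hp Hq s Hs. rewrite <- Aff_comb. apply H. apply InS_comb; auto.
Qed.

Lemma Aff_half a b c p q : Aff a b c (half p q) = half (Aff a b c p) (Aff a b c q).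
Proof. unfold half. apply Aff_comb. Qed.

Lemma InS_half p q : InS p -> InS q -> InS (half p q).
Proof. intros. unfold half. apply InS_comb; auto; lra. Qed.

Lemma Sub4 k x y z :
  SegCont k x y -> SegCont k y z -> SegCont k z x ->
  SegCont k (half x y) (half y z) -> SegCont k (half y z) (half z x) -> SegCont k (half z x) (half x y) ->
  Jt k x y z = (Jt k x (half x y) (half z x) + Jt k (half x y) y (half y z) +
                Jt k (half z x) (half y z) z + Jt k (half x y) (half y z) (half z x))%C.
Proof.
  intros H1 H2 H3 H4 H5 H6. unfold Jt.
  rewrite (Seg_rev k (half z x) (half x y)) by auto.
  rewrite (Seg_rev k (half x y) (half y z)) by auto.
  rewrite (Seg_rev k (half y z) (half z x)) by auto.
  unfold half.
  rewrite (Seg_split k x y (1/2)) by (auto; lra).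
  rewrite (Seg_split k y z (1/2)) by (auto; lra).
  rewrite (Seg_split k z x (1/2)) by (auto; lra).
  ring.
Qed.

Definition tri := (C * C * C)%type.

Definition JJ (k : C -> C) (a b c : C) (T : tri) : C :=
  let '(p, q, r) := T in Jt k (Aff a b c p) (Aff a b c q) (Aff a b c r).

Definition child1 (T : tri) : tri := let '(p, q, r) := T in (p, half p q, half r p).
Definition child2 (T : tri) : tri := let '(p, q, r) := T in (half p q, q, half q r).
Definition child3 (T : tri) : tri := let '(p, q, r) := T in (half r p, half q r, r).
Definition child4 (T : tri) : tri := let '(p, q, r) := T in (half p q, half q r, half r p).

Definition InT (T : tri) : Prop := let '(p, q, r) := T in InS p /\ InS q /\ InS r.

Lemma JJ_sub4 k a b c T : (forall v, InS v -> Ccont k (Aff a b c v)) -> InT T ->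
  JJ k a b c T = (JJ k a b c (child1 T) + JJ k a b c (child2 T) + JJ k a b c (child3 T) + JJ k a b c (child4 T))%C.
Proof.
  intros H. destruct T as [[p q] r]. simpl. intros [Hp [Hq Hr]].
  rewrite !Aff_half.
  apply Sub4; rewrite <- ?Aff_half; apply SegCont_Aff; auto; apply InS_half; auto.
Qed.

Lemma InT_children T : InT T -> InT (child1 T) /\ InT (child2 T) /\ InT (child3 T) /\ InT (child4 T).
Proof.
  destruct T as [[p q] r]. simpl. intros [Hp [Hq Hr]].
  pose proof (InS_half p q Hp Hq). pose proof (InS_half q r Hq Hr). pose proof (InS_half r p Hr Hp).
  tauto.
Qed.

Definition step (k : C -> C) (a b c : C) (T : tri) : tri :=
  if Rle_dec (Cmod (JJ k a b c T) / 4) (Cmod (JJ k a b c (child1 T))) then child1 T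
  else if Rle_dec (Cmod (JJ k a b c T) / 4) (Cmod (JJ k a b c (child2 T))) then child2 T
  else if Rle_dec (Cmod (JJ k a b c T) / 4) (Cmod (JJ k a b c (child3 T))) then child3 T
  else child4 T.

Lemma step_child k a b c T : step k a b c T = child1 T \/ step k a b c T = child2 T \/ step k a b c T = child3 T \/ step k a b c T = child4 T.
Proof. unfold step. repeat destruct Rle_dec; auto. Qed.

Lemma step_J k a b c T : (forall v, InS v -> Ccont k (Aff a b c v)) -> InT T ->
  Cmod (JJ k a b c T) / 4 <= Cmod (JJ k a b c (step k a b c T)).
Proof.
  intros H HT. pose proof (JJ_sub4 k a b c T H HT) as E.
  assert (Hs : Cmod (JJ k a b c T) <= Cmod (JJ k a b c (child1 T)) + Cmod (JJ k a b c (child2 T)) + Cmod (JJ k a b c (child3 T)) + Cmod (JJ k a b c (child4 T))).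
  { rewrite E at 1. eapply Rle_trans. apply Cmod_triangle. pose proof (Cmod_tri3 (JJ k a b c (child1 T)) (JJ k a b c (child2 T)) (JJ k a b c (child3 T))). lra. }
  unfold step. repeat destruct Rle_dec; auto.
  apply Rnot_le_lt in n. apply Rnot_le_lt in n0. apply Rnot_le_lt in n1. lra.
Qed.


Fixpoint seqT (k : C -> C) (a b c : C) (n : nat) : tri :=
  match n with O => (RtoC 0, RtoC 1, Ci) | S n' => step k a b c (seqT k a b c n') end.

Definition Dm (T : tri) (D : R) : Prop :=
  let '(p, q, r) := T in Cmod (q - p) <= D /\ Cmod (r - q) <= D /\ Cmod (p - r) <= D.

Definition tfst (T : tri) : C := let '(p, _, _) := T in p.

Lemma Cmod_half (x : C) : Cmod (RtoC (1/2) * x)%C = Cmod x / 2.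
Proof. rewrite Cmod_mult, Cmod_R, Rabs_pos_eq by lra. field. Qed.

Lemma half_bound (u v : C) D : Cmod v <= D -> (u = RtoC (1/2) * v \/ u = RtoC (1/2) * (- v))%C -> Cmod u <= D / 2.
Proof. intros H [E|E]; rewrite E, Cmod_half; try rewrite Cmod_opp; lra. Qed.

Ltac ceq := unfold half, RtoC, Cmult, Cplus, Cminus, Copp; simpl; unfold Cplus, Cmult; simpl; f_equal; field.

Lemma Dm_children T D : Dm T D ->
  Dm (child1 T) (D/2) /\ Dm (child2 T) (D/2) /\ Dm (child3 T) (D/2) /\ Dm (child4 T) (D/2).
Proof.
  destruct T as [[[p1 p2] [q1 q2]] [r1 r2]]. simpl. intros [H1 [H2 H3]].
  repeat split.
  all: first [ apply (half_bound _ _ D H1); solve [left; ceq | right; ceq]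
             | apply (half_bound _ _ D H2); solve [left; ceq | right; ceq]
             | apply (half_bound _ _ D H3); solve [left; ceq | right; ceq] ].
Qed.

Lemma move_children T D : Dm T D ->
  Cmod (tfst (child1 T) - tfst T) <= D / 2 /\ Cmod (tfst (child2 T) - tfst T) <= D / 2 /\
  Cmod (tfst (child3 T) - tfst T) <= D / 2 /\ Cmod (tfst (child4 T) - tfst T) <= D / 2.
Proof.
  destruct T as [[[p1 p2] [q1 q2]] [r1 r2]]. simpl. intros [H1 [H2 H3]].
  assert (0 <= D) by (pose proof (Cmod_ge_0 ((q1, q2) - (p1, p2))); lra).
  repeat split.
  - replace ((p1, p2) - (p1, p2))%C with (RtoC 0) by ceq. rewrite Cmod_0. lra.
  all: first [ apply (half_bound _ _ D H1); solve [left; ceq | right; ceq]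
             | apply (half_bound _ _ D H2); solve [left; ceq | right; ceq]
             | apply (half_bound _ _ D H3); solve [left; ceq | right; ceq] ].
Qed.

Lemma seqT_inv k a b c : (forall v, InS v -> Ccont k (Aff a b c v)) -> forall n,
  InT (seqT k a b c n) /\ Dm (seqT k a b c n) (2 / 2 ^ n) /\
  Cmod (JJ k a b c (seqT k a b c 0)) <= Cmod (JJ k a b c (seqT k a b c n)) * (2 ^ n * 2 ^ n).
Proof.
  intros H n. induction n as [|n [I1 [I2 I3]]].
  - simpl. split; [|split].
    + unfold InS, RtoC, Ci; simpl. repeat split; lra.
    + assert (A1 : Cmod (RtoC 1) = 1) by (rewrite Cmod_R; apply Rabs_R1).
      assert (A0 : Cmod (RtoC 0) = 0) by apply Cmod_0.
      pose proof Cmod_Ci as Ai. replace (2 / 2 ^ 0) with 2 by (simpl; field).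
      pose proof (Cmod_sub_le (RtoC 1) (RtoC 0)). pose proof (Cmod_sub_le Ci (RtoC 1)). pose proof (Cmod_sub_le (RtoC 0) Ci).
      split; [|split]; lra.
    + lra.
  - simpl seqT. destruct (InT_children _ I1) as [C1 [C2 [C3 C4]]].
    destruct (Dm_children _ _ I2) as [D1 [D2 [D3 D4]]].
    pose proof (step_J k a b c _ H I1) as SJ.
    replace (2 / 2 ^ S n) with (2 / 2 ^ n / 2) by (rewrite pow2_S; pose proof (pow2_ge1 n); field; lra).
    split; [|split].
    + destruct (step_child k a b c (seqT k a b c n)) as [E|[E|[E|E]]]; rewrite E; auto.
    + destruct (step_child k a b c (seqT k a b c n)) as [E|[E|[E|E]]]; rewrite E; auto.
    + rewrite pow2_S. pose proof (pow2_ge1 n).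
      pose proof (Cmod_ge_0 (JJ k a b c (step k a b c (seqT k a b c n)))).
      assert (Cmod (JJ k a b c (seqT k a b c n)) * (2 ^ n * 2 ^ n) <= Cmod (JJ k a b c (step k a b c (seqT k a b c n))) * (2 * 2 ^ n * (2 * 2 ^ n))).
      { replace (Cmod (JJ k a b c (step k a b c (seqT k a b c n))) * (2 * 2 ^ n * (2 * 2 ^ n))) with
          (4 * Cmod (JJ k a b c (step k a b c (seqT k a b c n))) * (2 ^ n * 2 ^ n)) by ring.
        apply Rmult_le_compat_r. nra. lra. }
      simpl seqT in I3. lra.
Qed.

Lemma seqT_move k a b c : (forall v, InS v -> Ccont k (Aff a b c v)) -> forall n,
  Cmod (tfst (seqT k a b c (S n)) - tfst (seqT k a b c n)) <= 1 / 2 ^ n.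
Proof.
  intros H n. destruct (seqT_inv k a b c H n) as [_ [I2 _]].
  destruct (move_children _ _ I2) as [M1 [M2 [M3 M4]]].
  replace (1 / 2 ^ n) with (2 / 2 ^ n / 2) by (pose proof (pow2_ge1 n); field; lra).
  simpl seqT. destruct (step_child k a b c (seqT k a b c n)) as [E|[E|[E|E]]]; rewrite E; auto.
Qed.


Lemma le_all_eps (x K : R) : 0 <= K -> (forall eps, 0 < eps -> x <= K * eps) -> x <= 0.
Proof.
  intros HK H. apply Rnot_lt_le. intros Hx.
  specialize (H (x / (2 * (K + 1)))). assert (0 < x / (2 * (K + 1))) by (apply Rdiv_lt_0_compat; lra).
  specialize (H H0). assert (K * (x / (2 * (K + 1))) < x).
  { apply Rmult_lt_reg_r with (2 * (K + 1)). lra. field_simplify; [|lra]. nra. }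
  lra.
Qed.

Lemma lim_ge0 (x : nat -> R) l : (forall n, 0 <= x n) -> (forall n, Rabs (x n - l) <= 4 / 2 ^ n) -> 0 <= l.
Proof.
  intros H1 H2. apply Rnot_lt_le. intros Hl. destruct (pow2_small 4 (- l)) as [n Hn]. lra.
  specialize (H1 n). specialize (H2 n). apply Rabs_le_between in H2. lra.
Qed.

Lemma Aff_lip a b c v w : Cmod (Aff a b c v - Aff a b c w) <= (Cmod (b - a) + Cmod (c - a) + 1) * Cmod (v - w).
Proof.
  replace (Aff a b c v - Aff a b c w)%C with (RtoC (Re (v - w)) * (b - a) + RtoC (Im (v - w)) * (c - a))%C.
  - eapply Rle_trans. apply Cmod_triangle. rewrite !Cmod_mult, !Cmod_R.
    pose proof (re_le_Cmod (v - w)). pose proof (im_le_Cmod (v - w)).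
    pose proof (Cmod_ge_0 (b - a)). pose proof (Cmod_ge_0 (c - a)). pose proof (Cmod_ge_0 (v - w)).
    pose proof (Rabs_pos (Re (v - w))). pose proof (Rabs_pos (Im (v - w))).
    assert (Rabs (Re (v - w)) * Cmod (b - a) <= Cmod (v - w) * Cmod (b - a)) by (apply Rmult_le_compat_r; lra).
    assert (Rabs (Im (v - w)) * Cmod (c - a) <= Cmod (v - w) * Cmod (c - a)) by (apply Rmult_le_compat_r; lra).
    nra.
  - destruct a, b, c, v, w. unfold Aff, RtoC, Cmult, Cplus, Cminus, Copp; simpl. unfold Cplus, Cmult; simpl. f_equal; ring.
Qed.

Lemma Jt_decomp k k1 k2 x y z : (forall w, k w = (k1 w + k2 w)%C) ->
  SegCont k1 x y -> SegCont k1 y z -> SegCont k1 z x ->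
  SegCont k2 x y -> SegCont k2 y z -> SegCont k2 z x ->
  Jt k x y z = (Jt k1 x y z + Jt k2 x y z)%C.
Proof.
  intros E. assert (Ek : k = fun w => (k1 w + k2 w)%C) by (extensionality w; apply E). subst k.
  intros. unfold Jt. rewrite !Seg_plus by auto. ring.
Qed.

Lemma Seg_affine (al be x y : C) : Seg (fun w => al + be * w)%C x y = (al * (y - x) + be * ((y * y - x * x) / 2))%C.
Proof.
  rewrite Seg_plus. rewrite Seg_const. rewrite Seg_scal. rewrite Seg_id. reflexivity.
  intros s _. apply Ccont_id. intros s _. apply Ccont_const.
  intros s _. apply (Ccont_mult (fun _ => be) (fun w => w)). apply Ccont_const. apply Ccont_id.
Qed.

Lemma Jt_affine (al be x y z : C) : Jt (fun w => al + be * w)%C x y z = RtoC 0.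
Proof. unfold Jt. rewrite !Seg_affine. destruct al, be, x, y, z. unfold RtoC, Cmult, Cplus, Cminus, Copp, Cdiv, Cinv; simpl. unfold Cplus, Cmult; simpl. f_equal; field. Qed.

Lemma edge_bound k a b c (z0 l vs : C) p q (rho eps del : R) :
  (forall v, InS v -> Ccont k (Aff a b c v)) -> InS p -> InS q ->
  (forall w, Cmod (w - z0) < del -> Cmod (k w - k z0 - l * (w - z0)) <= eps * Cmod (w - z0)) ->
  (forall s, 0 <= s <= 1 -> Cmod (p + RtoC s * (q - p) - vs) <= rho) ->
  (Cmod (b - a) + Cmod (c - a) + 1) * rho < del -> z0 = Aff a b c vs -> 0 <= eps ->
  Cmod (Seg (fun w => k w - k z0 - l * (w - z0))%C (Aff a b c p) (Aff a b c q)) <=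
    2 * Cmod (Aff a b c q - Aff a b c p) * (eps * ((Cmod (b - a) + Cmod (c - a) + 1) * rho)).
Proof.
  intros Hc Hp Hq K Hrho Hdel Hz He.
  apply Seg_bound.
  - intros s Hs. apply Ccont_minus. apply Ccont_minus. rewrite <- Aff_comb. apply Hc. apply InS_comb; auto.
    apply Ccont_const. apply (Ccont_mult (fun _ => l) (fun w => w - z0)%C). apply Ccont_const.
    apply Ccont_minus. apply Ccont_id. apply Ccont_const.
  - intros s Hs. rewrite <- Aff_comb.
    assert (D : Cmod (Aff a b c (p + RtoC s * (q - p)) - z0) <= (Cmod (b - a) + Cmod (c - a) + 1) * rho).
    { rewrite Hz. eapply Rle_trans. apply Aff_lip. apply Rmult_le_compat_l.
      pose proof (Cmod_ge_0 (b - a)). pose proof (Cmod_ge_0 (c - a)). lra. apply Hrho; auto. }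
    eapply Rle_trans. apply K. lra. apply Rmult_le_compat_l; auto.
Qed.

Lemma seg_dist (p q vs : C) (A B : R) : Cmod (p - vs) <= A -> Cmod (q - p) <= B ->
  forall s, 0 <= s <= 1 -> Cmod (p + RtoC s * (q - p) - vs) <= A + B.
Proof.
  intros H1 H2 s Hs. replace (p + RtoC s * (q - p) - vs)%C with ((p - vs) + RtoC s * (q - p))%C by ring.
  eapply Rle_trans. apply Cmod_triangle. rewrite Cmod_mult, Cmod_R, Rabs_pos_eq by lra.
  pose proof (Cmod_ge_0 (q - p)). nra.
Qed.

Lemma Aff_vertices a b c : Aff a b c (RtoC 0) = a /\ Aff a b c (RtoC 1) = b /\ Aff a b c Ci = c.
Proof.
  destruct a, b, c. unfold Aff, RtoC, Ci, Cmult, Cplus, Cminus, Copp; simpl. unfold Cplus, Cmult; simpl.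
  split; [|split]; f_equal; ring.
Qed.

Theorem goursat k a b c : (forall v, InS v -> exists l, CD k (Aff a b c v) l) -> Jt k a b c = RtoC 0.
Proof.
  intros Hd.
  assert (Hc : forall v, InS v -> Ccont k (Aff a b c v)).
  { intros v Hv. destruct (Hd v Hv) as [l Hl]. eapply CD_cont; eauto. }
  set (L := Cmod (b - a) + Cmod (c - a) + 1).
  assert (HL : 1 <= L) by (unfold L; pose proof (Cmod_ge_0 (b - a)); pose proof (Cmod_ge_0 (c - a)); lra).
  set (u := fun n => tfst (seqT k a b c n)).
  destruct (geo_limit (fun n => Re (u n)) 1 ltac:(lra)) as [lr Hr].
  { intros n. eapply Rle_trans; [|apply (seqT_move k a b c Hc n)].
    replace (Re (u (S n)) - Re (u n)) with (Re (u (S n) - u n)) by (destruct (u (S n)), (u n); simpl; ring).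
    apply re_le_Cmod. }
  destruct (geo_limit (fun n => Im (u n)) 1 ltac:(lra)) as [li Hi].
  { intros n. eapply Rle_trans; [|apply (seqT_move k a b c Hc n)].
    replace (Im (u (S n)) - Im (u n)) with (Im (u (S n) - u n)) by (destruct (u (S n)), (u n); simpl; ring).
    apply im_le_Cmod. }
  set (vs := (lr, li) : C).
  assert (Hv : forall n, Cmod (u n - vs) <= 4 / 2 ^ n).
  { intros n. eapply Rle_trans. apply Cmod_le_sum. specialize (Hr n). specialize (Hi n). simpl in Hr, Hi.
    replace (Re (u n - vs)) with (Re (u n) - lr) by (unfold vs; destruct (u n); simpl; ring).
    replace (Im (u n - vs)) with (Im (u n) - li) by (unfold vs; destruct (u n); simpl; ring).
    replace (4 / 2 ^ n) with (2 * 1 / 2 ^ n + 2 * 1 / 2 ^ n) by (pose proof (pow2_ge1 n); field; lra). lra. }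
  assert (Hu : forall n, InS (u n)).
  { intros n. unfold u. destruct (seqT_inv k a b c Hc n) as [I1 _]. destruct (seqT k a b c n) as [[p q] r]. simpl in *. tauto. }
  assert (Hvs : InS vs).
  { unfold InS. simpl. split; [|split].
    - apply (lim_ge0 (fun n => Re (u n))). intros n. apply (Hu n).
      intros n. specialize (Hr n). pose proof (pow2_ge1 n).
      replace (4 / 2 ^ n) with (2 * (2 * 1 / 2 ^ n)) by (field; lra).
      replace (2 * 1 / 2 ^ n) with (2 / 2 ^ n) in Hr by (field; lra).
      assert (0 < 2 / 2 ^ n) by (apply Rdiv_lt_0_compat; lra). lra.
    - apply (lim_ge0 (fun n => Im (u n))). intros n. apply (Hu n).
      intros n. specialize (Hi n). pose proof (pow2_ge1 n).
      replace (4 / 2 ^ n) with (2 * (2 * 1 / 2 ^ n)) by (field; lra).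
      replace (2 * 1 / 2 ^ n) with (2 / 2 ^ n) in Hi by (field; lra).
      assert (0 < 2 / 2 ^ n) by (apply Rdiv_lt_0_compat; lra). lra.
    - assert (0 <= 1 - (lr + li)); [|lra].
      apply (lim_ge0 (fun n => 1 - (Re (u n) + Im (u n)))). intros n. destruct (Hu n) as [_ [_ X]]. lra.
      intros n. specialize (Hr n). specialize (Hi n).
      replace (1 - (Re (u n) + Im (u n)) - (1 - (lr + li))) with (- ((Re (u n) - lr) + (Im (u n) - li))) by ring.
      rewrite Rabs_Ropp. eapply Rle_trans. apply Rabs_triang. pose proof (pow2_ge1 n).
      replace (4 / 2 ^ n) with (2 * 1 / 2 ^ n + 2 * 1 / 2 ^ n) by (field; lra). lra. }
  destruct (Hd vs Hvs) as [l Hl].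
  set (z0 := Aff a b c vs).
  assert (E0 : JJ k a b c (seqT k a b c 0) = Jt k a b c).
  { simpl. destruct (Aff_vertices a b c) as [A1 [A2 A3]]. rewrite A1, A2, A3. reflexivity. }
  rewrite <- E0. apply Cmod_eq_0. apply Rle_antisym; [|apply Cmod_ge_0].
  apply (le_all_eps _ (96 * L * L)). nra.
  intros eps He.
  destruct (Hl eps He) as [del [Hdel K]].
  destruct (pow2_small (8 * L) del Hdel) as [n Hn].
  destruct (seqT_inv k a b c Hc n) as [I1 [I2 I3]].
  pose proof (Hv n) as Hvn. unfold u in Hvn.
  destruct (seqT k a b c n) as [[p q] r] eqn:ET. simpl in I1, I2, Hvn. destruct I1 as [Hp [Hq Hr']]. destruct I2 as [D1 [D2 D3]].
  simpl in I3.
  pose proof (pow2_ge1 n) as P.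
  set (rho := 8 / 2 ^ n).
  assert (Hrho : L * rho < del) by (unfold rho; replace (L * (8 / 2 ^ n)) with (8 * L / 2 ^ n) by (field; lra); lra).
  set (Rm := fun w => (k w - k z0 - l * (w - z0))%C).
  set (Af := fun w => ((k z0 - l * z0) + l * w)%C).
  assert (SR : forall x y, InS x -> InS y -> SegCont Rm (Aff a b c x) (Aff a b c y)).
  { intros x y Hx Hy s Hs. unfold Rm. apply Ccont_minus. apply Ccont_minus. rewrite <- Aff_comb. apply Hc. apply InS_comb; auto.
    apply Ccont_const. apply (Ccont_mult (fun _ => l) (fun w => w - z0)%C). apply Ccont_const.
    apply Ccont_minus. apply Ccont_id. apply Ccont_const. }
  assert (SA : forall x y, SegCont Af x y).
  { intros x y s Hs. unfold Af. apply Ccont_plus. apply Ccont_const. apply (Ccont_mult (fun _ => l) (fun w => w)). apply Ccont_const. apply Ccont_id. }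
  rewrite (Jt_decomp k Rm Af (Aff a b c p) (Aff a b c q) (Aff a b c r)) in I3; auto.
  2: { intros w. unfold Rm, Af. ring. }
  unfold Af in I3. rewrite Jt_affine in I3. rewrite Cplus_0_r in I3.
  assert (Lip : forall x y, Cmod (Aff a b c y - Aff a b c x) <= L * Cmod (y - x)) by (intros; apply Aff_lip).
  assert (Hq' : Cmod (q - vs) <= 6 / 2 ^ n).
  { replace (q - vs)%C with ((q - p) + (p - vs))%C by ring. eapply Rle_trans. apply Cmod_triangle.
    replace (6 / 2 ^ n) with (2 / 2 ^ n + 4 / 2 ^ n) by (field; lra). lra. }
  assert (Hr2 : Cmod (r - vs) <= 6 / 2 ^ n).
  { replace (r - vs)%C with (- (p - r) + (p - vs))%C by ring. eapply Rle_trans. apply Cmod_triangle. rewrite Cmod_opp.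
    replace (6 / 2 ^ n) with (2 / 2 ^ n + 4 / 2 ^ n) by (field; lra). lra. }
  assert (EB : forall x y (A : R), InS x -> InS y -> Cmod (x - vs) <= A -> Cmod (y - x) <= 2 / 2 ^ n -> A + 2 / 2 ^ n <= rho ->
     Cmod (Seg Rm (Aff a b c x) (Aff a b c y)) <= 2 * (L * (2 / 2 ^ n)) * (eps * (L * rho))).
  { intros x y A Hx Hy HA Hxy HAr.
    eapply Rle_trans. apply (edge_bound k a b c z0 l vs x y rho eps del); auto.
    - intros s Hs. eapply Rle_trans. apply (seg_dist x y vs A (2 / 2 ^ n)); auto. lra.
    - lra.
    - pose proof (Cmod_ge_0 (Aff a b c y - Aff a b c x)). assert (0 <= eps * (L * rho)).
      { apply Rmult_le_pos. lra. apply Rmult_le_pos. lra. unfold rho. apply Rdiv_le_0_compat; lra. }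
      apply Rmult_le_compat_r; auto. apply Rmult_le_compat_l. lra.
      eapply Rle_trans. apply Lip. apply Rmult_le_compat_l; lra. }
  assert (B1 := EB p q (4 / 2 ^ n) Hp Hq Hvn D1 ltac:(unfold rho; unfold Rdiv; rewrite <- Rmult_plus_distr_r; apply Rmult_le_compat_r; [left; apply Rinv_0_lt_compat; lra | lra])).
  assert (B2 := EB q r (6 / 2 ^ n) Hq Hr' Hq' D2 ltac:(unfold rho; unfold Rdiv; rewrite <- Rmult_plus_distr_r; apply Rmult_le_compat_r; [left; apply Rinv_0_lt_compat; lra | lra])).
  assert (B3 := EB r p (6 / 2 ^ n) Hr' Hp Hr2 D3 ltac:(unfold rho; unfold Rdiv; rewrite <- Rmult_plus_distr_r; apply Rmult_le_compat_r; [left; apply Rinv_0_lt_compat; lra | lra])).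
  assert (J : Cmod (Jt Rm (Aff a b c p) (Aff a b c q) (Aff a b c r)) <= 3 * (2 * (L * (2 / 2 ^ n)) * (eps * (L * rho)))).
  { unfold Jt. eapply Rle_trans. apply Cmod_tri3. lra. }
  simpl. eapply Rle_trans. exact I3.
  replace (96 * L * L * eps) with (3 * (2 * (L * (2 / 2 ^ n)) * (eps * (L * rho))) * (2 ^ n * 2 ^ n)) by (unfold rho; field; lra).
  apply Rmult_le_compat_r. nra. exact J.
Qed.


Lemma Aff_comp a b c x y z w : Aff a b c (Aff x y z w) = Aff (Aff a b c x) (Aff a b c y) (Aff a b c z) w.
Proof. destruct a, b, c, x, y, z, w. unfold Aff, RtoC, Cmult, Cplus, Cminus, Copp; simpl. unfold Cplus, Cmult; simpl. f_equal; ring. Qed.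

Lemma Seg_split_at k a b m (l : R) : 0 <= l <= 1 -> SegCont k a b -> m = (a + RtoC l * (b - a))%C ->
  Seg k a b = (Seg k a m + Seg k m b)%C.
Proof. intros H1 H2 E. subst m. apply Seg_split; auto. Qed.

Definition pt (s t : R) : C := (s, t).

Lemma Aff_pt a b c s t : Aff a b c (pt s t) = (a + RtoC s * (b - a) + RtoC t * (c - a))%C.
Proof. reflexivity. Qed.

Lemma InS_pt s t : 0 <= s -> 0 <= t -> s + t <= 1 -> InS (pt s t).
Proof. intros. unfold InS, pt; simpl. lra. Qed.

Definition det (u v : C) : R := Re u * Im v - Im u * Re v.

Lemma det_inj u v s t : det u v <> 0 -> (RtoC s * u + RtoC t * v)%C = RtoC 0 -> s = 0 /\ t = 0.
Proof.
  intros Hd E. destruct u as [u1 u2], v as [v1 v2]. unfold det in Hd; simpl in Hd.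
  unfold RtoC, Cmult, Cplus in E; simpl in E. injection E as E1 E2.
  assert (s * (u1 * v2 - u2 * v1) = 0).
  { transitivity (v2 * (s*u1 + t*v1) - v1 * (s*u2 + t*v2)). ring.
    replace (s*u1 + t*v1) with 0 by lra. replace (s*u2+t*v2) with 0 by lra. ring. }
  assert (t * (u1 * v2 - u2 * v1) = 0).
  { transitivity (u1 * (s*u2 + t*v2) - u2 * (s*u1 + t*v1)). ring.
    replace (s*u1 + t*v1) with 0 by lra. replace (s*u2+t*v2) with 0 by lra. ring. }
  split; [apply (Rmult_eq_reg_r (u1 * v2 - u2 * v1)); lra|apply (Rmult_eq_reg_r (u1 * v2 - u2 * v1)); lra].
Qed.

Lemma Aff_ne_vertex p b c (P : C) : det (b - p) (c - p) <> 0 -> 0 < Re P + Im P -> Aff p b c P <> p.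
Proof.
  intros Hd HP E. assert (E' : (RtoC (Re P) * (b - p) + RtoC (Im P) * (c - p))%C = RtoC 0).
  { transitivity (Aff p b c P - p)%C. unfold Aff. ring. rewrite E. ring. }
  destruct (det_inj _ _ _ _ Hd E'). lra.
Qed.

Lemma tri_aux s e x y : 0 <= s <= 1 -> 0 < e -> 0 <= x -> 0 <= y -> s * e * x <= e * (x + y).
Proof. intros. assert (s * e * x <= 1 * e * x) by (apply Rmult_le_compat_r; [lra|apply Rmult_le_compat_r; lra]). nra. Qed.
Lemma tri_aux2 s e x y : 0 <= s <= 1 -> 0 < e -> 0 <= x -> 0 <= y -> (1 - s) * e * x + s * e * y <= e * (x + y).
Proof. intros. assert ((1 - s) * e * x <= 1 * e * x) by (apply Rmult_le_compat_r; [lra|apply Rmult_le_compat_r; lra]).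
  assert (s * e * y <= 1 * e * y) by (apply Rmult_le_compat_r; [lra|apply Rmult_le_compat_r; lra]). lra. Qed.

Lemma small_tri_bound k p u v (M del e : R) :
  (forall w, Cmod (w - p) < del -> Cmod (k w) <= M) -> 0 < e -> e * (Cmod u + Cmod v) < del ->
  SegCont k p (p + RtoC e * u)%C -> SegCont k (p + RtoC e * u)%C (p + RtoC e * v)%C -> SegCont k (p + RtoC e * v)%C p ->
  Cmod (Jt k p (p + RtoC e * u)%C (p + RtoC e * v)%C) <= 6 * (e * (Cmod u + Cmod v)) * M.
Proof.
  intros HM He Hdel S1 S2 S3. pose proof (Cmod_ge_0 u). pose proof (Cmod_ge_0 v).
  assert (HM0 : 0 <= M). { eapply Rle_trans. apply Cmod_ge_0. apply (HM p). replace (p - p)%C with (RtoC 0) by ring. rewrite Cmod_0. nra. }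
  assert (L1 : Cmod (p + RtoC e * u - p) <= e * (Cmod u + Cmod v)).
  { replace (p + RtoC e * u - p)%C with (RtoC e * u)%C by ring. rewrite Cmod_mult, Cmod_R, Rabs_pos_eq; nra. }
  assert (L2 : Cmod (p + RtoC e * v - (p + RtoC e * u)) <= e * (Cmod u + Cmod v)).
  { replace (p + RtoC e * v - (p + RtoC e * u))%C with (RtoC e * (v - u))%C by ring. rewrite Cmod_mult, Cmod_R, Rabs_pos_eq by lra.
    pose proof (Cmod_sub_le v u). nra. }
  assert (L3 : Cmod (p - (p + RtoC e * v)) <= e * (Cmod u + Cmod v)).
  { replace (p - (p + RtoC e * v))%C with (- (RtoC e * v))%C by ring. rewrite Cmod_opp, Cmod_mult, Cmod_R, Rabs_pos_eq; nra. }
  unfold Jt. eapply Rle_trans. apply Cmod_tri3.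
  assert (B1 : Cmod (Seg k p (p + RtoC e * u)) <= 2 * (e * (Cmod u + Cmod v)) * M).
  { eapply Rle_trans. apply Seg_bound with (M := M); auto.
    - intros s Hs. apply HM. replace (p + RtoC s * (p + RtoC e * u - p) - p)%C with (RtoC (s * e) * u)%C.
      rewrite Cmod_mult, Cmod_R, Rabs_pos_eq by nra. 
      apply Rle_lt_trans with (e * (Cmod u + Cmod v)); [|lra]. apply tri_aux; auto.
      destruct p, u. unfold RtoC, Cmult, Cplus, Cminus, Copp; simpl. unfold Cplus, Cmult; simpl. f_equal; ring.
    - apply Rmult_le_compat_r; auto. lra. }
  assert (B2 : Cmod (Seg k (p + RtoC e * u) (p + RtoC e * v)) <= 2 * (e * (Cmod u + Cmod v)) * M).
  { eapply Rle_trans. apply Seg_bound with (M := M); auto.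
    - intros s Hs. apply HM. replace (p + RtoC e * u + RtoC s * (p + RtoC e * v - (p + RtoC e * u)) - p)%C with (RtoC ((1 - s) * e) * u + RtoC (s * e) * v)%C.
      eapply Rle_lt_trans. apply Cmod_triangle. rewrite !Cmod_mult, !Cmod_R, !Rabs_pos_eq by nra. 
      apply Rle_lt_trans with (e * (Cmod u + Cmod v)); [|lra]. apply tri_aux2; auto.
      destruct p, u, v. unfold RtoC, Cmult, Cplus, Cminus, Copp; simpl. unfold Cplus, Cmult; simpl. f_equal; ring.
    - apply Rmult_le_compat_r; auto. lra. }
  assert (B3 : Cmod (Seg k (p + RtoC e * v) p) <= 2 * (e * (Cmod u + Cmod v)) * M).
  { eapply Rle_trans. apply Seg_bound with (M := M); auto.
    - intros s Hs. apply HM. replace (p + RtoC e * v + RtoC s * (p - (p + RtoC e * v)) - p)%C with (RtoC ((1 - s) * e) * v)%C.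
      rewrite Cmod_mult, Cmod_R, Rabs_pos_eq by nra. 
      apply Rle_lt_trans with (e * (Cmod u + Cmod v)); [|lra].
      pose proof (tri_aux (1 - s) e (Cmod v) (Cmod u) ltac:(lra) He ltac:(auto) ltac:(auto)). lra.
      destruct p, v. unfold RtoC, Cmult, Cplus, Cminus, Copp; simpl. unfold Cplus, Cmult; simpl. f_equal; ring.
    - apply Rmult_le_compat_r; auto. lra. }
  lra.
Qed.

Ltac cgen := unfold Aff, pt, RtoC, Cmult, Cplus, Cminus, Copp; simpl; unfold Cplus, Cmult; simpl; f_equal; ring.

Lemma Aff_p00 p b c : Aff p b c (pt 0 0) = p.
Proof. destruct p, b, c. cgen. Qed.
Lemma Aff_p10 p b c : Aff p b c (pt 1 0) = b.
Proof. destruct p, b, c. cgen. Qed.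
Lemma Aff_p01 p b c : Aff p b c (pt 0 1) = c.
Proof. destruct p, b, c. cgen. Qed.
Lemma Aff_pe0 p b c e : Aff p b c (pt e 0) = (p + RtoC e * (b - p))%C.
Proof. destruct p, b, c. cgen. Qed.
Lemma Aff_p0e p b c e : Aff p b c (pt 0 e) = (p + RtoC e * (c - p))%C.
Proof. destruct p, b, c. cgen. Qed.

Lemma goursat_nondeg_eq k p b c (e : R) :
  (forall v, InS v -> Ccont k (Aff p b c v)) ->
  (forall v, InS v -> Aff p b c v <> p -> exists l, CD k (Aff p b c v) l) ->
  det (b - p) (c - p) <> 0 -> 0 < e < 1 ->
  Jt k p b c = Jt k p (p + RtoC e * (b - p))%C (p + RtoC e * (c - p))%C.
Proof.
  intros Hc Hd Hdet He.
  assert (SC : forall x y, InS x -> InS y -> SegCont k (Aff p b c x) (Aff p b c y)) by (intros; apply SegCont_Aff; auto).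
  assert (I00 : InS (pt 0 0)) by (apply InS_pt; lra).
  assert (I10 : InS (pt 1 0)) by (apply InS_pt; lra).
  assert (I01 : InS (pt 0 1)) by (apply InS_pt; lra).
  assert (Ie0 : InS (pt e 0)) by (apply InS_pt; lra).
  assert (I0e : InS (pt 0 e)) by (apply InS_pt; lra).
  assert (G1 : Jt k (Aff p b c (pt e 0)) (Aff p b c (pt 1 0)) (Aff p b c (pt 0 e)) = RtoC 0).
  { apply goursat. intros w Hw. rewrite <- Aff_comp. apply Hd.
    - destruct w as [w1 w2]. unfold InS in *; simpl in *. unfold Aff, pt, RtoC, Cmult, Cplus, Cminus, Copp; simpl. nra.
    - apply Aff_ne_vertex; auto. destruct w as [w1 w2]. unfold InS in *; simpl in *. unfold Aff, pt, RtoC, Cmult, Cplus, Cminus, Copp; simpl. nra. }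
  assert (G2 : Jt k (Aff p b c (pt 1 0)) (Aff p b c (pt 0 1)) (Aff p b c (pt 0 e)) = RtoC 0).
  { apply goursat. intros w Hw. rewrite <- Aff_comp. apply Hd.
    - destruct w as [w1 w2]. unfold InS in *; simpl in *. unfold Aff, pt, RtoC, Cmult, Cplus, Cminus, Copp; simpl. nra.
    - apply Aff_ne_vertex; auto. destruct w as [w1 w2]. unfold InS in *; simpl in *. unfold Aff, pt, RtoC, Cmult, Cplus, Cminus, Copp; simpl. nra. }
  pose proof (SC _ _ I00 I10) as S1. pose proof (SC _ _ I01 I00) as S2.
  pose proof (SC _ _ Ie0 I0e) as S3. pose proof (SC _ _ I10 I0e) as S4.
  rewrite Aff_p00, Aff_p10, Aff_p01, Aff_pe0, Aff_p0e in *.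
  unfold Jt in *.
  rewrite (Seg_split_at k p b (p + RtoC e * (b - p))%C e) by (auto; lra).
  rewrite (Seg_split_at k c p (p + RtoC e * (c - p))%C (1 - e)); [| lra | auto | destruct p, c; cgen].
  rewrite (Seg_rev k (p + RtoC e * (b - p))%C (p + RtoC e * (c - p))%C) in G1 by auto.
  rewrite (Seg_rev k b (p + RtoC e * (c - p))%C) in G2 by auto.
  set (b' := (p + RtoC e * (b - p))%C) in *. set (c' := (p + RtoC e * (c - p))%C) in *.
  transitivity ((Seg k p b' + Seg k b' c' + Seg k c' p) + (Seg k b' b + Seg k b c' + - Seg k b' c') + (Seg k b c + Seg k c c' + - Seg k b c'))%C.
  ring. rewrite G1, G2. ring.
Qed.

Lemma goursat_nondeg k p b c :
  (forall v, InS v -> Ccont k (Aff p b c v)) ->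
  (forall v, InS v -> Aff p b c v <> p -> exists l, CD k (Aff p b c v) l) ->
  det (b - p) (c - p) <> 0 -> Jt k p b c = RtoC 0.
Proof.
  intros Hc Hd Hdet.
  assert (Cp : Ccont k p). { pose proof (Hc (pt 0 0) ltac:(apply InS_pt; lra)) as H0. rewrite Aff_p00 in H0. exact H0. }
  destruct (Cp 1 ltac:(lra)) as [d0 [Hd0 K0]].
  set (M := Cmod (k p) + 1).
  assert (HM : forall w, Cmod (w - p) < d0 -> Cmod (k w) <= M).
  { intros w Hw. specialize (K0 w Hw). unfold M. replace (k w) with ((k w - k p) + k p)%C by ring.
    eapply Rle_trans. apply Cmod_triangle. lra. }
  set (u := (b - p)%C). set (v := (c - p)%C).
  set (S := Cmod u + Cmod v + 1).
  pose proof (Cmod_ge_0 u). pose proof (Cmod_ge_0 v). pose proof (Cmod_ge_0 (k p)).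
  apply Cmod_eq_0. apply Rle_antisym; [|apply Cmod_ge_0].
  apply (le_all_eps _ (6 * S * M)). unfold S, M; nra.
  intros eps Heps.
  set (e := Rmin eps (Rmin (1/2) (d0 / (2 * S)))).
  assert (HS : 0 < S) by (unfold S; lra).
  assert (He1 : e <= eps) by apply Rmin_l.
  assert (He2 : e <= 1/2) by (unfold e; eapply Rle_trans; [apply Rmin_r|apply Rmin_l]).
  assert (He3 : e <= d0 / (2 * S)) by (unfold e; eapply Rle_trans; [apply Rmin_r|apply Rmin_r]).
  assert (He0 : 0 < e).
  { unfold e. apply Rmin_glb_lt. lra. apply Rmin_glb_lt. lra. apply Rdiv_lt_0_compat; lra. }
  assert (Hed : e * (Cmod u + Cmod v) < d0).
  { apply Rle_lt_trans with (d0 / (2 * S) * S). apply Rmult_le_compat; unfold S in *; lra.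
    replace (d0 / (2 * S) * S) with (d0 / 2) by (field; lra). lra. }
  rewrite (goursat_nondeg_eq k p b c e Hc Hd Hdet ltac:(lra)).
  assert (SC : forall x y, InS x -> InS y -> SegCont k (Aff p b c x) (Aff p b c y)) by (intros; apply SegCont_Aff; auto).
  assert (I00 : InS (pt 0 0)) by (apply InS_pt; lra).
  assert (Ie0 : InS (pt e 0)) by (apply InS_pt; lra).
  assert (I0e : InS (pt 0 e)) by (apply InS_pt; lra).
  pose proof (SC _ _ I00 Ie0) as S1. pose proof (SC _ _ Ie0 I0e) as S2. pose proof (SC _ _ I0e I00) as S3.
  rewrite ?Aff_p00, ?Aff_pe0, ?Aff_p0e in S1. rewrite ?Aff_p00, ?Aff_pe0, ?Aff_p0e in S2. rewrite ?Aff_p00, ?Aff_pe0, ?Aff_p0e in S3.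
  eapply Rle_trans. apply (small_tri_bound k p u v M d0 e); auto.
  unfold M. pose proof (Cmod_ge_0 (k p)).
  assert (e * (Cmod u + Cmod v) <= eps * S). { unfold S. apply Rmult_le_compat; lra. }
  nra.
Qed.

Definition inhull (s l : R) : Prop := (0 <= s <= 1) \/ (1 <= s <= l) \/ (l <= s <= 0).

Lemma hull_param s l : inhull s l -> exists sg tu, InS (pt sg tu) /\ sg + tu * l = s.
Proof.
  intros [H|[H|H]].
  - exists s, 0. split. apply InS_pt; lra. ring.
  - destruct (Rle_dec s 1).
    + exists s, 0. split. apply InS_pt; lra. ring.
    + set (t := (s - 1) / (l - 1)).
      assert (Ht : 0 <= t <= 1). { unfold t. split. apply Rdiv_le_0_compat; lra.
        apply Rmult_le_reg_r with (l - 1). lra. unfold Rdiv. rewrite Rmult_assoc, Rinv_l by lra. lra. }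
      exists (1 - t), t. split. apply InS_pt; lra. unfold t. field. lra.
  - destruct (Rle_dec 0 s).
    + exists 0, 0. split. apply InS_pt; lra. lra.
    + set (t := s / l).
      assert (Ht : 0 <= t <= 1). { unfold t. split.
        replace (s / l) with ((- s) / (- l)) by (field; lra). apply Rdiv_le_0_compat; lra.
        replace (s / l) with ((- s) / (- l)) by (field; lra).
        apply Rmult_le_reg_r with (- l). lra. unfold Rdiv. rewrite Rmult_assoc, Rinv_l by lra. lra. }
      exists 0, t. split. apply InS_pt; lra. unfold t. field. lra.
Qed.

Lemma inhull_seg (x y s l : R) : (x = 0 \/ x = 1 \/ x = l) -> (y = 0 \/ y = 1 \/ y = l) ->
  Rmin x y <= s <= Rmax x y -> inhull s l.
Proof.
  intros Hx Hy Hs. unfold inhull.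
  destruct (Rle_dec 0 s); destruct (Rle_dec s 1).
  - left; lra.
  - right; left. unfold Rmin, Rmax in Hs. destruct Rle_dec; destruct Hx as [Hx|[Hx|Hx]]; destruct Hy as [Hy|[Hy|Hy]]; subst; lra.
  - right; right. unfold Rmin, Rmax in Hs. destruct Rle_dec; destruct Hx as [Hx|[Hx|Hx]]; destruct Hy as [Hy|[Hy|Hy]]; subst; lra.
  - lra.
Qed.

Lemma goursat_deg k p b c :
  (forall v, InS v -> Ccont k (Aff p b c v)) -> det (b - p) (c - p) = 0 -> Jt k p b c = RtoC 0.
Proof.
  intros Hc Hdet.
  assert (SC : forall x y, InS x -> InS y -> SegCont k (Aff p b c x) (Aff p b c y)) by (intros; apply SegCont_Aff; auto).
  assert (I00 : InS (pt 0 0)) by (apply InS_pt; lra).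
  assert (I10 : InS (pt 1 0)) by (apply InS_pt; lra).
  assert (I01 : InS (pt 0 1)) by (apply InS_pt; lra).
  destruct (Req_dec (Cmod (b - p)) 0) as [Hu|Hu].
  - apply Cmod_eq_0 in Hu. assert (Eb : b = p) by (replace b with ((b - p) + p)%C by ring; rewrite Hu; ring).
    pose proof (SC _ _ I00 I01) as S1. rewrite Aff_p00, Aff_p01 in S1.
    unfold Jt. subst b. rewrite (Seg_rev k p c S1). unfold Seg at 1. replace (p - p)%C with (RtoC 0) by ring. ring.
  - set (u := (b - p)%C). set (v := (c - p)%C).
    assert (Hn : 0 < Re u * Re u + Im u * Im u).
    { assert (0 < Cmod u). { destruct (Rle_lt_or_eq_dec 0 (Cmod u) (Cmod_ge_0 u)) as [X|X]; auto. exfalso. apply Hu. symmetry. exact X. }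
      replace (Re u * Re u + Im u * Im u) with (Cmod u ^ 2) by (rewrite Cmod2_alt; ring). apply pow_lt; auto. }
    set (l := (Re u * Re v + Im u * Im v) / (Re u * Re u + Im u * Im u)).
    assert (Hv : v = (RtoC l * u)%C).
    { unfold det in Hdet. fold u v in Hdet. unfold l. destruct u as [u1 u2], v as [v1 v2]. simpl in *.
      assert (E1 : u2 * (u1 * v2 - u2 * v1) = 0) by (rewrite Hdet; ring).
      assert (E2 : u1 * (u1 * v2 - u2 * v1) = 0) by (rewrite Hdet; ring).
      unfold RtoC, Cmult; simpl. f_equal.
      - apply (Rmult_eq_reg_r (u1 * u1 + u2 * u2)); [|lra]. field_simplify; [|lra]. nra.
      - apply (Rmult_eq_reg_r (u1 * u1 + u2 * u2)); [|lra]. field_simplify; [|lra]. nra. }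
    assert (Hcs : forall s, inhull s l -> Ccont k (p + RtoC s * u)%C).
    { intros s Hs. destruct (hull_param s l Hs) as [sg [tu [Hin Heq]]]. specialize (Hc _ Hin).
      replace (p + RtoC s * u)%C with (Aff p b c (pt sg tu)). exact Hc.
      rewrite Aff_pt. fold u v. rewrite Hv. rewrite <- Heq. destruct p, u. cgen. }
    assert (Ep : p = (p + RtoC 0 * u)%C) by (destruct p, u; cgen).
    assert (Eb : b = (p + RtoC 1 * u)%C) by (unfold u; destruct p, b; cgen).
    assert (Ec : c = (p + RtoC l * u)%C) by (rewrite <- Hv; unfold v; destruct p, c; cgen).
    assert (X0 : 0 = 0 \/ 0 = 1 \/ 0 = l) by lra. assert (X1 : 1 = 0 \/ 1 = 1 \/ 1 = l) by lra.
    assert (Xl : l = 0 \/ l = 1 \/ l = l) by lra.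
    assert (R01 : RCont (fun s => k (p + RtoC s * u)%C) 0 1).
    { intros s Hs. apply param_rcont. apply Hcs. eapply inhull_seg; [exact X0|exact X1|exact Hs]. }
    assert (R1l : RCont (fun s => k (p + RtoC s * u)%C) 1 l).
    { intros s Hs. apply param_rcont. apply Hcs. eapply inhull_seg; [exact X1|exact Xl|exact Hs]. }
    assert (R0l : RCont (fun s => k (p + RtoC s * u)%C) 0 l).
    { intros s Hs. apply param_rcont. apply Hcs. eapply inhull_seg; [exact X0|exact Xl|exact Hs]. }
    unfold Jt.
    rewrite (SegParam k p u 0 1 p b Ep Eb) by (intros s Hs; apply Hcs; eapply inhull_seg; [exact X0|exact X1|exact Hs]).
    rewrite (SegParam k p u 1 l b c Eb Ec) by (intros s Hs; apply Hcs; eapply inhull_seg; [exact X1|exact Xl|exact Hs]).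
    rewrite (SegParam k p u l 0 c p Ec Ep) by (intros s Hs; apply Hcs; eapply inhull_seg; [exact Xl|exact X0|exact Hs]).
    rewrite <- !Cmult_plus_distr_l.
    rewrite (CInt_Chasles _ 0 1 l R01 R1l). rewrite (CInt_swap _ 0 l R0l). ring.
Qed.

Theorem goursat_vertex k p b c :
  (forall v, InS v -> Ccont k (Aff p b c v)) ->
  (forall v, InS v -> Aff p b c v <> p -> exists l, CD k (Aff p b c v) l) ->
  Jt k p b c = RtoC 0.
Proof.
  intros Hc Hd. destruct (Req_dec (det (b - p) (c - p)) 0) as [H|H].
  - apply goursat_deg; auto.
  - apply goursat_nondeg; auto.
Qed.


Definition inball (c0 : C) (r : R) (w : C) : Prop := Cmod (w - c0) < r.

Lemma ball_Aff c0 r p z w v : inball c0 r p -> inball c0 r z -> inball c0 r w -> InS v -> inball c0 r (Aff p z w v).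
Proof.
  unfold inball, InS. intros Hp Hz Hw [H1 [H2 H3]].
  replace (Aff p z w v - c0)%C with (RtoC (1 - Re v - Im v) * (p - c0) + RtoC (Re v) * (z - c0) + RtoC (Im v) * (w - c0))%C
    by (unfold Aff; destruct v; unfold RtoC, Cmult, Cplus, Cminus, Copp; simpl; unfold Cplus, Cmult; simpl; f_equal; ring).
  eapply Rle_lt_trans. apply Cmod_tri3. rewrite !Cmod_mult, !Cmod_R, !Rabs_pos_eq by lra.
  set (m := Rmax (Cmod (p - c0)) (Rmax (Cmod (z - c0)) (Cmod (w - c0)))).
  assert (Hm : m < r). { unfold m. apply Rmax_lub_lt; auto. apply Rmax_lub_lt; auto. }
  assert (M1 : Cmod (p - c0) <= m) by apply Rmax_l.
  assert (M2 : Cmod (z - c0) <= m) by (unfold m; eapply Rle_trans; [apply Rmax_l|apply Rmax_r]).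
  assert (M3 : Cmod (w - c0) <= m) by (unfold m; eapply Rle_trans; [apply Rmax_r|apply Rmax_r]).
  assert ((1 - Re v - Im v) * Cmod (p - c0) <= (1 - Re v - Im v) * m) by (apply Rmult_le_compat_l; lra).
  assert (Re v * Cmod (z - c0) <= Re v * m) by (apply Rmult_le_compat_l; lra).
  assert (Im v * Cmod (w - c0) <= Im v * m) by (apply Rmult_le_compat_l; lra).
  lra.
Qed.

Theorem seg_primitive k c0 r p : inball c0 r p ->
  (forall w, inball c0 r w -> Ccont k w) ->
  (forall w, inball c0 r w -> w <> p -> exists l, CD k w l) ->
  forall z, inball c0 r z -> CD (fun w => Seg k p w) z (k z).
Proof.
  intros Hp Hc Hd z Hz eps He.
  destruct (Hc z Hz (eps / 4)) as [d1 [Hd1 K1]]; [lra|].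
  set (d := Rmin d1 (r - Cmod (z - c0))).
  assert (Hd0 : 0 < d). { unfold d. apply Rmin_glb_lt; auto. unfold inball in Hz. lra. }
  exists d. split; auto. intros w Hw.
  assert (Hw1 : Cmod (w - z) < d1) by (pose proof (Rmin_l d1 (r - Cmod (z - c0))); fold d in H; lra).
  assert (Hwb : inball c0 r w).
  { unfold inball. replace (w - c0)%C with ((w - z) + (z - c0))%C by ring. eapply Rle_lt_trans. apply Cmod_triangle.
    pose proof (Rmin_r d1 (r - Cmod (z - c0))). fold d in H. lra. }
  assert (HT : Jt k p z w = RtoC 0).
  { apply goursat_vertex.
    - intros v Hv. apply Hc. apply ball_Aff; auto.
    - intros v Hv Hne. apply Hd; auto. apply ball_Aff; auto. }
  assert (SC : forall v1 v2, InS v1 -> InS v2 -> SegCont k (Aff p z w v1) (Aff p z w v2)).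
  { intros. apply SegCont_Aff; auto. intros v Hv. apply Hc. apply ball_Aff; auto. }
  assert (I00 : InS (pt 0 0)) by (apply InS_pt; lra).
  assert (I10 : InS (pt 1 0)) by (apply InS_pt; lra).
  assert (I01 : InS (pt 0 1)) by (apply InS_pt; lra).
  pose proof (SC _ _ I00 I01) as Spw. pose proof (SC _ _ I10 I01) as Szw.
  rewrite ?Aff_p00, ?Aff_p01, ?Aff_p10 in Spw. rewrite ?Aff_p00, ?Aff_p01, ?Aff_p10 in Szw.
  unfold Jt in HT. rewrite (Seg_rev k p w Spw) in HT.
  replace (Seg k p w - Seg k p z - k z * (w - z))%C with (Seg (fun x => k x - k z)%C z w)%C.
  2: { rewrite Seg_minus; auto. rewrite Seg_const.
       replace (Seg k p w) with (Seg k p z + Seg k z w - (Seg k p z + Seg k z w + - Seg k p w))%C by ring.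
       rewrite HT. ring. apply SegCont_const. }
  eapply Rle_trans. apply Seg_bound with (M := eps / 4).
  - intros s Hs. apply Ccont_minus. apply Szw; auto. apply Ccont_const.
  - intros s Hs. left. apply K1.
    replace (z + RtoC s * (w - z) - z)%C with (RtoC s * (w - z))%C by ring.
    rewrite Cmod_mult, Cmod_R, Rabs_pos_eq by lra. pose proof (Cmod_ge_0 (w - z)).
    apply Rle_lt_trans with (1 * Cmod (w - z)). apply Rmult_le_compat_r; lra. lra.
  - pose proof (Cmod_ge_0 (w - z)). nra.
Qed.


Lemma RD_lip F t l : RD F t l -> exists d, 0 < d /\ forall h, Rabs h < d -> Cmod (F (t + h)%R - F t) <= (Cmod l + 1) * Rabs h.
Proof.
  intros H. destruct (H 1 ltac:(lra)) as [d [Hd K]]. exists d. split; auto. intros h Hh.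
  specialize (K h Hh). replace (F (t + h)%R - F t)%C with ((F (t + h)%R - F t - RtoC h * l) + RtoC h * l)%C by ring.
  eapply Rle_trans. apply Cmod_triangle. rewrite Cmod_mult, Cmod_R. lra.
Qed.

Lemma RD_rcont F t l : RD F t l -> rcont F t.
Proof.
  intros H eps He. destruct (RD_lip F t l H) as [d [Hd K]]. pose proof (Cmod_ge_0 l).
  exists (Rmin d (eps / (Cmod l + 2))). split.
  apply Rmin_glb_lt; auto. apply Rdiv_lt_0_compat; lra.
  intros s Hs. specialize (K (s - t)). replace (t + (s - t)) with s in K by ring.
  assert (Rabs (s - t) < d) by (pose proof (Rmin_l d (eps / (Cmod l + 2))); lra).
  assert (Rabs (s - t) < eps / (Cmod l + 2)) by (pose proof (Rmin_r d (eps / (Cmod l + 2))); lra).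
  eapply Rle_lt_trans. apply K; auto.
  apply Rle_lt_trans with ((Cmod l + 2) * Rabs (s - t)). pose proof (Rabs_pos (s - t)). nra.
  apply Rmult_lt_reg_r with (/ (Cmod l + 2)). apply Rinv_0_lt_compat; lra.
  replace ((Cmod l + 2) * Rabs (s - t) * / (Cmod l + 2)) with (Rabs (s - t)) by (field; lra).
  unfold Rdiv in H2. lra.
Qed.

Lemma RD_chain (Phi : C -> C) (g : R -> C) t L dg : CD Phi (g t) L -> RD g t dg -> RD (fun s => Phi (g s)) t (L * dg)%C.
Proof.
  intros HP Hg eps He.
  pose proof (Cmod_ge_0 L). pose proof (Cmod_ge_0 dg).
  destruct (RD_lip g t dg Hg) as [d1 [Hd1 K1]].
  set (e1 := eps / 2 / (Cmod dg + 1)).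
  assert (He1 : 0 < e1) by (unfold e1; apply Rdiv_lt_0_compat; lra).
  destruct (HP e1 He1) as [d2 [Hd2 K2]].
  set (e2 := eps / 2 / (Cmod L + 1)).
  assert (He2 : 0 < e2) by (unfold e2; apply Rdiv_lt_0_compat; lra).
  destruct (Hg e2 He2) as [d3 [Hd3 K3]].
  set (d := Rmin d1 (Rmin (d2 / (Cmod dg + 1)) d3)).
  assert (Hd : 0 < d). { unfold d. apply Rmin_glb_lt; auto. apply Rmin_glb_lt; auto. apply Rdiv_lt_0_compat; lra. }
  exists d. split; auto. intros h Hh.
  assert (h1 : Rabs h < d1) by (unfold d in Hh; pose proof (Rmin_l d1 (Rmin (d2 / (Cmod dg + 1)) d3)); lra).
  assert (h2 : Rabs h < d2 / (Cmod dg + 1)).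
  { unfold d in Hh. pose proof (Rmin_r d1 (Rmin (d2 / (Cmod dg + 1)) d3)). pose proof (Rmin_l (d2 / (Cmod dg + 1)) d3). lra. }
  assert (h3 : Rabs h < d3).
  { unfold d in Hh. pose proof (Rmin_r d1 (Rmin (d2 / (Cmod dg + 1)) d3)). pose proof (Rmin_r (d2 / (Cmod dg + 1)) d3). lra. }
  specialize (K1 h h1). specialize (K3 h h3).
  pose proof (Rabs_pos h).
  assert (Hgd : Cmod (g (t + h)%R - g t) < d2).
  { eapply Rle_lt_trans. exact K1. apply Rmult_lt_reg_r with (/ (Cmod dg + 1)). apply Rinv_0_lt_compat; lra.
    replace ((Cmod dg + 1) * Rabs h * / (Cmod dg + 1)) with (Rabs h) by (field; lra). unfold Rdiv in h2. lra. }
  specialize (K2 (g (t + h)%R) Hgd).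
  replace (Phi (g (t + h)%R) - Phi (g t) - RtoC h * (L * dg))%C with
    ((Phi (g (t + h)%R) - Phi (g t) - L * (g (t + h)%R - g t)) + L * (g (t + h)%R - g t - RtoC h * dg))%C by ring.
  eapply Rle_trans. apply Cmod_triangle. rewrite Cmod_mult.
  assert (A1 : e1 * Cmod (g (t + h)%R - g t) <= eps / 2 * Rabs h).
  { apply Rle_trans with (e1 * ((Cmod dg + 1) * Rabs h)). apply Rmult_le_compat_l; lra.
    unfold e1. right. field. lra. }
  assert (A2 : Cmod L * Cmod (g (t + h)%R - g t - RtoC h * dg) <= eps / 2 * Rabs h).
  { apply Rle_trans with (Cmod L * (e2 * Rabs h)). apply Rmult_le_compat_l; lra.
    unfold e2. apply Rle_trans with (eps / 2 * Rabs h * (Cmod L / (Cmod L + 1))).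
    right. field. lra. rewrite <- (Rmult_1_r (eps / 2 * Rabs h)) at 2. apply Rmult_le_compat_l. nra.
    apply Rmult_le_reg_r with (Cmod L + 1). lra. unfold Rdiv. rewrite Rmult_assoc, Rinv_l by lra. lra. }
  lra.
Qed.

Lemma RD_lin (c d : C) t : RD (fun s => (c + RtoC s * d)%C) t d.
Proof.
  intros eps He. exists 1. split. lra. intros h Hh.
  replace (c + RtoC (t + h) * d - (c + RtoC t * d) - RtoC h * d)%C with (RtoC 0).
  rewrite Cmod_0. pose proof (Rabs_pos h). nra.
  destruct c, d. unfold RtoC, Cmult, Cplus, Cminus, Copp; simpl. unfold Cplus, Cmult; simpl. f_equal; ring.
Qed.

Lemma CD_zero_const F c r p : (forall w, inball c r w -> CD F w (RtoC 0)) -> inball c r p -> F p = F c.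
Proof.
  intros H Hp.
  assert (Hin : forall t, 0 <= t <= 1 -> inball c r (c + RtoC t * (p - c))%C).
  { intros t Ht. unfold inball in *. replace (c + RtoC t * (p - c) - c)%C with (RtoC t * (p - c))%C by ring.
    rewrite Cmod_mult, Cmod_R, Rabs_pos_eq by lra. pose proof (Cmod_ge_0 (p - c)).
    apply Rle_lt_trans with (1 * Cmod (p - c)). apply Rmult_le_compat_r; lra. lra. }
  assert (E := CInt_FTC (fun s => F (c + RtoC s * (p - c))%C) (fun _ => RtoC 0) 0 1).
  rewrite CInt_const in E.
  assert (E2 : (RtoC 0 * RtoC (1 - 0))%C = (F (c + RtoC 1 * (p - c))%C - F (c + RtoC 0 * (p - c))%C)%C).
  { apply E.
    - intros t Ht. rewrite Rmin_left, Rmax_right in Ht by lra.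
      replace (RtoC 0) with (RtoC 0 * (p - c))%C by ring.
      apply RD_chain. apply H. apply Hin; auto. apply RD_lin.
    - intros t _. apply rcont_const. }
  replace (c + RtoC 1 * (p - c))%C with p in E2 by (destruct c, p; unfold RtoC, Cmult, Cplus, Cminus, Copp; simpl; unfold Cplus, Cmult; simpl; f_equal; ring).
  replace (c + RtoC 0 * (p - c))%C with c in E2 by (destruct c, p; unfold RtoC, Cmult, Cplus, Cminus, Copp; simpl; unfold Cplus, Cmult; simpl; f_equal; ring).
  apply Ceq_minus. rewrite <- E2. ring.
Qed.


Lemma CD_inv (p w0 : C) : w0 <> p -> CD (fun w => / (w - p))%C w0 (- / ((w0 - p) * (w0 - p)))%C.
Proof.
  intros Hne. set (a := (w0 - p)%C).
  assert (Ha : a <> RtoC 0) by (unfold a; intro E; apply Hne; apply Ceq_minus; exact E).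
  assert (Hma : 0 < Cmod a) by (apply Cmod_gt_0; exact Ha).
  intros eps He.
  exists (Rmin (Cmod a / 2) (eps * (Cmod a * Cmod a * Cmod a) / 2)). split.
  { apply Rmin_glb_lt. lra. apply Rdiv_lt_0_compat; [|lra]. repeat apply Rmult_lt_0_compat; lra. }
  intros w Hw.
  pose proof (Rmin_l (Cmod a / 2) (eps * (Cmod a * Cmod a * Cmod a) / 2)) as M1.
  pose proof (Rmin_r (Cmod a / 2) (eps * (Cmod a * Cmod a * Cmod a) / 2)) as M2.
  set (x := (w - w0)%C) in *.
  assert (Hax : Cmod a / 2 <= Cmod (a + x)).
  { pose proof (Cmod_diff_ge a (- x)). rewrite Cmod_opp in H.
    replace (a - - x)%C with (a + x)%C in H by ring. lra. }
  assert (Hax0 : (a + x)%C <> RtoC 0). { intro E. rewrite E, Cmod_0 in Hax. lra. }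
  assert (Ew : (w - p)%C = (a + x)%C) by (unfold a, x; ring).
  rewrite Ew. fold a.
  replace (/ (a + x) - / a - - / (a * a) * x)%C with (x * x * / (a * a * (a + x)))%C.
  2: { field. split; auto. }
  rewrite Cmod_mult, Cmod_inv, !Cmod_mult.
  2: { apply Cmult_neq_0; auto. apply Cmult_neq_0; auto. }
  pose proof (Cmod_ge_0 x).
  assert (Hx : Cmod x < eps * (Cmod a * Cmod a * Cmod a) / 2) by lra.
  assert (P : 0 < Cmod a * Cmod a * Cmod (a + x)) by (repeat apply Rmult_lt_0_compat; lra).
  apply Rle_trans with (Cmod x * Cmod x * / (Cmod a * Cmod a * (Cmod a / 2))).
  - apply Rmult_le_compat_l. nra. apply Rinv_le_contravar. repeat apply Rmult_lt_0_compat; lra.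
    apply Rmult_le_compat_l. nra. exact Hax.
  - replace (Cmod x * Cmod x * / (Cmod a * Cmod a * (Cmod a / 2))) with (Cmod x * (2 * Cmod x / (Cmod a * Cmod a * Cmod a))) by (field; lra).
    rewrite (Rmult_comm eps (Cmod x)). apply Rmult_le_compat_l; auto.
    apply Rmult_le_reg_r with (Cmod a * Cmod a * Cmod a). repeat apply Rmult_lt_0_compat; lra.
    unfold Rdiv. rewrite Rmult_assoc, Rinv_l by (apply Rgt_not_eq; repeat apply Rmult_lt_0_compat; lra). lra.
Qed.

Definition cis (t : R) : C := (cos t, sin t).
Definition gam (c : C) (r t : R) : C := (c + RtoC r * cis t)%C.
Definition dgam (r t : R) : C := (Ci * RtoC r * cis t)%C.

Lemma RD_of_dpl F t l : derivable_pt_lim (fun s => Re (F s)) t (Re l) -> derivable_pt_lim (fun s => Im (F s)) t (Im l) -> RD F t l.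
Proof.
  intros H1 H2 eps He.
  destruct (H1 (eps / 2) ltac:(lra)) as [d1 K1]. destruct (H2 (eps / 2) ltac:(lra)) as [d2 K2].
  exists (Rmin d1 d2). split. apply Rmin_glb_lt; apply cond_pos. intros h Hh.
  pose proof (Rmin_l d1 d2). pose proof (Rmin_r d1 d2).
  destruct (Req_dec h 0) as [E|E].
  - subst h. rewrite Rplus_0_r. replace (F t - F t - RtoC 0 * l)%C with (RtoC 0) by ring. rewrite Cmod_0, Rabs_R0. lra.
  - specialize (K1 h E ltac:(lra)). specialize (K2 h E ltac:(lra)).
    assert (Ha : 0 < Rabs h) by (apply Rabs_pos_lt; auto).
    assert (B : forall (f : R -> R) (m : R), Rabs ((f (t + h) - f t) / h - m) < eps / 2 -> Rabs (f (t + h) - f t - h * m) <= eps / 2 * Rabs h).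
    { intros f m Hf. replace (f (t + h) - f t - h * m) with (((f (t + h) - f t) / h - m) * h) by (field; auto).
      rewrite Rabs_mult. apply Rmult_le_compat_r; lra. }
    apply (B (fun s => Re (F s)) (Re l)) in K1. apply (B (fun s => Im (F s)) (Im l)) in K2.
    eapply Rle_trans. apply Cmod_le_sum.
    replace (Re (F (t + h)%R - F t - RtoC h * l)%C) with (Re (F (t + h)) - Re (F t) - h * Re l) by (destruct (F (t+h)), (F t), l; simpl; ring).
    replace (Im (F (t + h)%R - F t - RtoC h * l)%C) with (Im (F (t + h)) - Im (F t) - h * Im l) by (destruct (F (t+h)), (F t), l; simpl; ring).
    lra.
Qed.

Lemma RD_cis t : RD cis t (Ci * cis t)%C.
Proof.
  apply RD_of_dpl; simpl.
  - replace (0 * cos t - 1 * sin t) with (- sin t) by ring. apply derivable_pt_lim_cos.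
  - replace (0 * sin t + 1 * cos t) with (cos t) by ring. apply derivable_pt_lim_sin.
Qed.

Lemma RD_affine_map F t l (c k : C) : RD F t l -> RD (fun s => (c + k * F s)%C) t (k * l)%C.
Proof.
  intros H eps He. pose proof (Cmod_ge_0 k).
  destruct (H (eps / (Cmod k + 1))) as [d [Hd K]]. apply Rdiv_lt_0_compat; lra.
  exists d. split; auto. intros h Hh. specialize (K h Hh).
  replace (c + k * F (t + h)%R - (c + k * F t) - RtoC h * (k * l))%C with (k * (F (t + h)%R - F t - RtoC h * l))%C by ring.
  rewrite Cmod_mult. pose proof (Rabs_pos h).
  apply Rle_trans with (Cmod k * (eps / (Cmod k + 1) * Rabs h)). apply Rmult_le_compat_l; lra.
  assert (Cmod k * (eps / (Cmod k + 1)) <= eps).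
  { apply Rmult_le_reg_r with (Cmod k + 1). lra. field_simplify; lra. }
  nra.
Qed.

Lemma RD_gam c r t : RD (gam c r) t (dgam r t).
Proof.
  unfold gam, dgam. replace (Ci * RtoC r * cis t)%C with (RtoC r * (Ci * cis t))%C by ring.
  apply RD_affine_map. apply RD_cis.
Qed.

Lemma RD_dgam r t : RD (dgam r) t (Ci * RtoC r * (Ci * cis t))%C.
Proof.
  unfold dgam. replace (fun s => Ci * RtoC r * cis s)%C with (fun s => RtoC 0 + Ci * RtoC r * cis s)%C
    by (extensionality s; ring).
  apply RD_affine_map. apply RD_cis.
Qed.

Lemma rcont_gam c r t : rcont (gam c r) t.
Proof. eapply RD_rcont. apply RD_gam. Qed.
Lemma rcont_dgam r t : rcont (dgam r) t.
Proof. eapply RD_rcont. apply RD_dgam. Qed.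

Lemma gam_2PI c r : gam c r (2 * PI) = gam c r 0.
Proof. unfold gam, cis. rewrite cos_2PI, sin_2PI, cos_0, sin_0. reflexivity. Qed.

Lemma circle_FTC (Phi phi : C -> C) c r :
  (forall t, CD Phi (gam c r t) (phi (gam c r t))) -> (forall t, Ccont phi (gam c r t)) ->
  CInt (fun t => phi (gam c r t) * dgam r t)%C 0 (2 * PI) = RtoC 0.
Proof.
  intros HD HC. rewrite (CInt_FTC (fun t => Phi (gam c r t))).
  - rewrite gam_2PI. ring.
  - intros t _. apply RD_chain. apply HD. apply RD_gam.
  - intros t _. apply rcont_mult. apply rcont_comp. apply rcont_gam. apply HC. apply rcont_dgam.
Qed.

Lemma RCont_bounded w a b : a <= b -> RCont w a b -> exists M, forall t, a <= t <= b -> Cmod (w t) <= M.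
Proof.
  intros Hab H.
  destruct (continuity_ab_maj (fun t => Cmod (w t)) a b Hab) as [x [Hx _]].
  - intros c0 Hc0. assert (Hr : rcont w c0) by (apply H; rewrite Rmin_left, Rmax_right; lra).
    intros eps He. destruct (Hr eps He) as [d [Hd K]]. exists d. split; auto.
    intros y [_ Hy]. simpl in *. unfold R_dist in *. specialize (K y Hy).
    apply Rabs_def1.
    + pose proof (Cmod_diff_ge (w y) (w c0)). lra.
    + pose proof (Cmod_diff_ge (w c0) (w y)). rewrite Cmod_sub_sym in H0. lra.
  - exists (Cmod (w x)). auto.
Qed.


Lemma Cmod_cis t : Cmod (cis t) = 1.
Proof. unfold Cmod, cis. simpl. replace (cos t * (cos t * 1) + sin t * (sin t * 1)) with (Rsqr (sin t) + Rsqr (cos t)) by (unfold Rsqr; ring).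
  rewrite sin2_cos2. apply sqrt_1. Qed.

Lemma gam_dist c r t : 0 <= r -> Cmod (gam c r t - c) = r.
Proof. intros H. unfold gam. replace (c + RtoC r * cis t - c)%C with (RtoC r * cis t)%C by ring.
  rewrite Cmod_mult, Cmod_R, Cmod_cis, Rabs_pos_eq by lra. ring. Qed.

Lemma gam_far c r t p : 0 <= r -> r - Cmod (p - c) <= Cmod (gam c r t - p).
Proof.
  intros H. rewrite <- (gam_dist c r t H) at 1. 
  replace (gam c r t - c)%C with ((gam c r t - p) + (p - c))%C by ring.
  pose proof (Cmod_triangle (gam c r t - p) (p - c)). lra.
Qed.

Lemma rcont_opp f t : rcont f t -> rcont (fun s => - f s)%C t.
Proof. intros H eps He. destruct (H eps He) as [d [Hd K]]. exists d. split; auto. intros s Hs.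
  replace (- f s - - f t)%C with (- (f s - f t))%C by ring. rewrite Cmod_opp. auto. Qed.

Lemma rcont_minus f g t : rcont f t -> rcont g t -> rcont (fun s => f s - g s)%C t.
Proof. intros. apply rcont_plus; auto. apply rcont_opp; auto. Qed.

Lemma CInt_opp f a b : RCont f a b -> CInt (fun t => - f t)%C a b = (- CInt f a b)%C.
Proof.
  intros H. transitivity (CInt (fun t => RtoC (-1) * f t)%C a b).
  apply CInt_ext. intros. destruct (f t). unfold RtoC, Cmult, Copp; simpl. f_equal; ring.
  rewrite CInt_scal by auto. destruct (CInt f a b). unfold RtoC, Cmult, Copp; simpl. f_equal; ring.
Qed.

Lemma CInt_minus f g a b : RCont f a b -> RCont g a b -> CInt (fun t => f t - g t)%C a b = (CInt f a b - CInt g a b)%C.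
Proof.
  intros Hf Hg. unfold Cminus at 1. rewrite CInt_plus; auto. rewrite CInt_opp; auto.
  intros t Ht. apply rcont_opp. auto.
Qed.

Lemma DI_gen (K K' : C -> C) (w : R -> C) c r :
  0 < r -> (forall t, rcont w t) ->
  (forall a, a <> RtoC 0 -> Ccont K a) -> (forall a, a <> RtoC 0 -> Ccont K' a) ->
  (forall d, 0 < d -> exists B, 0 <= B /\ forall a dl, d <= Cmod a -> Cmod dl <= d / 2 ->
        Cmod (K (a - dl)%C - K a - dl * K' a) <= B * (Cmod dl * Cmod dl)) ->
  forall z, inball c r z ->
  CD (fun z => CInt (fun t => w t * K (gam c r t - z))%C 0 (2 * PI)) z (CInt (fun t => w t * K' (gam c r t - z))%C 0 (2 * PI)).
Proof.
  intros Hr Hw HK HK' HB z Hz.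
  unfold inball in Hz. set (d := r - Cmod (z - c)). assert (Hd : 0 < d) by (unfold d; lra).
  assert (Hfar : forall t z', Cmod (z' - z) <= d / 2 -> d / 2 <= Cmod (gam c r t - z')).
  { intros t z' Hz'. pose proof (gam_far c r t z' ltac:(lra)).
    replace (z' - c)%C with ((z' - z) + (z - c))%C in H by ring. pose proof (Cmod_triangle (z' - z) (z - c)). unfold d in *. lra. }
  assert (Hne : forall t z', Cmod (z' - z) <= d / 2 -> (gam c r t - z')%C <> RtoC 0).
  { intros t z' Hz' E. specialize (Hfar t z' Hz'). rewrite E, Cmod_0 in Hfar. lra. }
  assert (RC : forall (L : C -> C), (forall a, a <> RtoC 0 -> Ccont L a) -> forall z', Cmod (z' - z) <= d / 2 ->
     RCont (fun t => w t * L (gam c r t - z'))%C 0 (2 * PI)).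
  { intros L HL z' Hz' t _. apply rcont_mult. apply Hw. apply rcont_comp.
    intros eps He. destruct (rcont_gam c r t eps He) as [dd [Hdd Kd]]. exists dd. split; auto. intros s Hs.
    replace (gam c r s - z' - (gam c r t - z'))%C with (gam c r s - gam c r t)%C by ring. apply Kd; auto.
    apply HL. apply Hne; auto. }
  assert (PIpos : 0 < 2 * PI) by (pose proof PI_RGT_0; lra).
  destruct (RCont_bounded w 0 (2 * PI) ltac:(lra) (fun t _ => Hw t)) as [Mw HMw].
  assert (HMw0 : 0 <= Mw) by (eapply Rle_trans; [apply Cmod_ge_0|apply (HMw 0); lra]).
  destruct (HB (d / 2) ltac:(lra)) as [B [HB0 HBb]].
  intros eps He.
  set (Q := 2 * (2 * PI - 0) * (Mw * B) + 1).
  assert (HQ : 0 < Q) by (unfold Q; assert (0 <= Mw * B) by (apply Rmult_le_pos; auto); nra).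
  exists (Rmin (d / 4) (eps / Q)). split. apply Rmin_glb_lt. lra. apply Rdiv_lt_0_compat; lra.
  intros z' Hz'.
  pose proof (Rmin_l (d / 4) (eps / Q)). pose proof (Rmin_r (d / 4) (eps / Q)).
  set (dl := (z' - z)%C) in *.
  assert (Hdl : Cmod dl <= d / 2) by lra.
  assert (Hdl0 : Cmod dl <= d / 2 / 2) by lra.
  assert (RZ : RCont (fun t => w t * K (gam c r t - z))%C 0 (2 * PI)).
  { apply RC; auto. replace (z - z)%C with (RtoC 0) by ring. rewrite Cmod_0. lra. }
  assert (RZ' : RCont (fun t => w t * K' (gam c r t - z))%C 0 (2 * PI)).
  { apply RC; auto. replace (z - z)%C with (RtoC 0) by ring. rewrite Cmod_0. lra. }
  assert (RZ2 : RCont (fun t => w t * K (gam c r t - z'))%C 0 (2 * PI)) by (apply RC; auto).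
  rewrite (Cmult_comm (CInt (fun t => w t * K' (gam c r t - z))%C 0 (2 * PI)) dl).
  rewrite <- (CInt_scal dl (fun t => w t * K' (gam c r t - z))%C) by auto.
  rewrite <- CInt_minus by auto.
  rewrite <- CInt_minus.
  2: { intros t Ht. apply rcont_minus. apply RZ2; auto. apply RZ; auto. }
  2: { intros t Ht. apply rcont_mult. apply rcont_const. apply RZ'; auto. }
  rewrite (CInt_ext _ (fun t => w t * (K ((gam c r t - z) - dl) - K (gam c r t - z) - dl * K' (gam c r t - z)))%C).
  2: { intros t _. replace (gam c r t - z' )%C with (gam c r t - z - dl)%C by (unfold dl; ring). ring. }
  eapply Rle_trans. apply CInt_bound with (M := Mw * (B * (Cmod dl * Cmod dl))). lra.
  - intros t Ht.
      assert (E : (fun t0 => w t0 * (K (gam c r t0 - z - dl) - K (gam c r t0 - z) - dl * K' (gam c r t0 - z)))%C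
                 = (fun t0 => (w t0 * K (gam c r t0 - z') - w t0 * K (gam c r t0 - z)) - dl * (w t0 * K' (gam c r t0 - z)))%C).
      { extensionality t0. replace (gam c r t0 - z' )%C with (gam c r t0 - z - dl)%C by (unfold dl; ring). ring. }
      rewrite E. apply rcont_minus. apply rcont_minus. apply RZ2; auto. apply RZ; auto.
      apply rcont_mult. apply rcont_const. apply RZ'; auto.
  - intros t Ht. rewrite Cmod_mult. apply Rmult_le_compat. apply Cmod_ge_0. apply Cmod_ge_0.
    apply HMw; auto. apply HBb; auto. apply Hfar. replace (z - z)%C with (RtoC 0) by ring. rewrite Cmod_0. lra.
  - pose proof (Cmod_ge_0 dl).
    assert (Cmod dl * Q <= eps).
    { apply Rle_trans with (eps / Q * Q). apply Rmult_le_compat_r; lra. right. field. lra. }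
    assert (2 * (2 * PI - 0) * (Mw * (B * (Cmod dl * Cmod dl))) <= Cmod dl * Q * Cmod dl).
    { unfold Q. assert (0 <= Mw * B) by (apply Rmult_le_pos; auto). nra. }
    nra.
Qed.


Lemma Ccont_inv0 a : a <> RtoC 0 -> Ccont (fun w => / w)%C a.
Proof.
  intros H. assert (H' : a <> RtoC 0) by auto.
  pose proof (CD_cont _ _ _ (CD_inv (RtoC 0) a H')) as C.
  replace (fun w => / w)%C with (fun w => / (w - RtoC 0))%C. exact C.
  extensionality w. f_equal. ring.
Qed.

Definition K1 (a : C) : C := (/ a)%C.
Definition K2 (a : C) : C := (/ a * / a)%C.
Definition K3 (a : C) : C := (RtoC 2 * (/ a * / a * / a))%C.

Lemma Ccont_K1 a : a <> RtoC 0 -> Ccont K1 a.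
Proof. apply Ccont_inv0. Qed.
Lemma Ccont_K2 a : a <> RtoC 0 -> Ccont K2 a.
Proof. intros H. apply (Ccont_mult (fun w => / w) (fun w => / w))%C; apply Ccont_inv0; auto. Qed.
Lemma Ccont_K3 a : a <> RtoC 0 -> Ccont K3 a.
Proof. intros H. unfold K3. apply (Ccont_mult (fun _ => RtoC 2)). apply Ccont_const.
  apply (Ccont_mult (fun w => / w * / w)%C (fun w => / w)%C). apply Ccont_K2; auto. apply Ccont_inv0; auto. Qed.

Lemma far_aux (a dl : C) d : 0 < d -> d <= Cmod a -> Cmod dl <= d / 2 -> a <> RtoC 0 /\ (a - dl)%C <> RtoC 0 /\ d / 2 <= Cmod (a - dl).
Proof.
  intros Hd Ha Hdl. pose proof (Cmod_diff_ge a dl).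
  split; [|split].
  - intro E. rewrite E, Cmod_0 in Ha. lra.
  - intro E. rewrite E, Cmod_0 in H. lra.
  - lra.
Qed.

Lemma bound_K1 d : 0 < d -> exists B, 0 <= B /\ forall a dl, d <= Cmod a -> Cmod dl <= d / 2 ->
  Cmod (K1 (a - dl)%C - K1 a - dl * K2 a) <= B * (Cmod dl * Cmod dl).
Proof.
  intros Hd. exists (2 / (d * d * d)). split. apply Rdiv_le_0_compat; [lra|]. repeat apply Rmult_lt_0_compat; lra.
  intros a dl Ha Hdl. destruct (far_aux a dl d Hd Ha Hdl) as [A0 [A1 A2]].
  unfold K1, K2. replace (/ (a - dl) - / a - dl * (/ a * / a))%C with (dl * dl * (/ a * / a * / (a - dl)))%C by (field; auto).
  rewrite !Cmod_mult, !Cmod_inv by auto.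
  pose proof (Cmod_ge_0 dl).
  assert (P : / Cmod a * / Cmod a * / Cmod (a - dl) <= 2 / (d * d * d)).
  { replace (2 / (d * d * d)) with (/ d * / d * / (d / 2)) by (field; lra).
    apply Rmult_le_compat. apply Rmult_le_pos; left; apply Rinv_0_lt_compat; lra.
    left; apply Rinv_0_lt_compat; lra.
    apply Rmult_le_compat; try (left; apply Rinv_0_lt_compat; lra); apply Rinv_le_contravar; lra.
    apply Rinv_le_contravar; lra. }
  rewrite (Rmult_comm (2 / (d * d * d))). apply Rmult_le_compat_l. nra. exact P.
Qed.

Lemma bound_K2 d : 0 < d -> exists B, 0 <= B /\ forall a dl, d <= Cmod a -> Cmod dl <= d / 2 ->
  Cmod (K2 (a - dl)%C - K2 a - dl * K3 a) <= B * (Cmod dl * Cmod dl).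
Proof.
  intros Hd. exists (16 / (d * d * d * d)). split. apply Rdiv_le_0_compat; [lra|]. repeat apply Rmult_lt_0_compat; lra.
  intros a dl Ha Hdl. destruct (far_aux a dl d Hd Ha Hdl) as [A0 [A1 A2]].
  unfold K2, K3. replace (/ (a - dl) * / (a - dl) - / a * / a - dl * (RtoC 2 * (/ a * / a * / a)))%C
    with (dl * dl * ((RtoC 3 * a - RtoC 2 * dl) * (/ a * / a * / a * / (a - dl) * / (a - dl))))%C
    by (field; auto).
  rewrite !Cmod_mult, !Cmod_inv by auto.
  pose proof (Cmod_ge_0 dl). pose proof (Cmod_ge_0 a).
  assert (N : Cmod (RtoC 3 * a - RtoC 2 * dl) <= 4 * Cmod a).
  { eapply Rle_trans. apply Cmod_sub_le. rewrite !Cmod_mult, !Cmod_R, !Rabs_pos_eq by lra. lra. }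
  set (X := / Cmod a). set (Y := / Cmod (a - dl)).
  assert (HX : 0 < X) by (unfold X; apply Rinv_0_lt_compat; lra).
  assert (HY : 0 < Y <= 2 / d).
  { unfold Y. split. apply Rinv_0_lt_compat; lra. replace (2 / d) with (/ (d / 2)) by (field; lra). apply Rinv_le_contravar; lra. }
  assert (HX2 : X <= / d) by (unfold X; apply Rinv_le_contravar; lra).
  assert (HaX : Cmod a * X = 1) by (unfold X; field; lra).
  assert (Q : Cmod (RtoC 3 * a - RtoC 2 * dl) * (X * X * X * Y * Y) <= 16 / (d * d * d * d)).
  { apply Rle_trans with (4 * Cmod a * (X * X * X * Y * Y)).
    apply Rmult_le_compat_r. assert (0 < X * X * X * Y * Y) by (repeat apply Rmult_lt_0_compat; lra). lra. exact N.
    replace (4 * Cmod a * (X * X * X * Y * Y)) with (4 * (Cmod a * X) * (X * X * Y * Y)) by ring. rewrite HaX.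
    replace (16 / (d * d * d * d)) with (4 * 1 * (/ d * / d * (2 / d) * (2 / d))) by (field; lra).
    apply Rmult_le_compat_l. lra.
    assert (0 <= / d) by (left; apply Rinv_0_lt_compat; lra).
    apply Rmult_le_compat; try nra. all: try (apply Rmult_le_compat; try nra). all: try (apply Rmult_le_compat; try nra). }
  rewrite (Rmult_comm (16 / (d * d * d * d))). apply Rmult_le_compat_l. nra. exact Q.
Qed.

Definition H1 (w : R -> C) c r z := CInt (fun t => w t * K1 (gam c r t - z))%C 0 (2 * PI).
Definition H2 (w : R -> C) c r z := CInt (fun t => w t * K2 (gam c r t - z))%C 0 (2 * PI).
Definition H3 (w : R -> C) c r z := CInt (fun t => w t * K3 (gam c r t - z))%C 0 (2 * PI).

Lemma CD_H1 w c r z : 0 < r -> (forall t, rcont w t) -> inball c r z -> CD (H1 w c r) z (H2 w c r z).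
Proof. intros. apply DI_gen; auto. apply Ccont_K1. apply Ccont_K2. apply bound_K1. Qed.

Lemma CD_H2 w c r z : 0 < r -> (forall t, rcont w t) -> inball c r z -> CD (H2 w c r) z (H3 w c r z).
Proof. intros. apply DI_gen; auto. apply Ccont_K2. apply Ccont_K3. apply bound_K2. Qed.


Lemma gam_ne c r t p : 0 < r -> inball c r p -> gam c r t <> p.
Proof. intros Hr Hp E. pose proof (gam_dist c r t ltac:(lra)). rewrite E in H. unfold inball in Hp. lra. Qed.

Lemma gam_in c r R0 t : 0 <= r < R0 -> inball c R0 (gam c r t).
Proof. intros H. unfold inball. rewrite gam_dist; lra. Qed.

Lemma Ccont_K1_shift (w y : C) : y <> w -> Ccont (fun x => K1 (x - w)) y.
Proof. intros H. eapply CD_cont. apply (CD_inv w y H). Qed.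

Lemma rcont_K_gam (K : C -> C) c r p t : (forall a, a <> RtoC 0 -> Ccont K a) -> 0 < r -> inball c r p ->
  rcont (fun s => K (gam c r s - p))%C t.
Proof.
  intros HK Hr Hp. apply rcont_comp.
  intros eps He. destruct (rcont_gam c r t eps He) as [dd [Hdd Kd]]. exists dd. split; auto. intros s Hs.
  replace (gam c r s - p - (gam c r t - p))%C with (gam c r s - gam c r t)%C by ring. apply Kd; auto.
  apply HK. intro E. apply (gam_ne c r t p Hr Hp). apply Ceq_minus. exact E.
Qed.

Lemma I_const c r p : 0 < r -> inball c r p -> H1 (dgam r) c r p = (Ci * RtoC (2 * PI - 0))%C.
Proof.
  intros Hr Hp.
  assert (Hw : forall t, rcont (dgam r) t) by apply rcont_dgam.
  assert (Hc : inball c r c) by (unfold inball; replace (c - c)%C with (RtoC 0) by ring; rewrite Cmod_0; lra).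
  assert (E : H1 (dgam r) c r p = H1 (dgam r) c r c).
  { apply (CD_zero_const (H1 (dgam r) c r) c r p); auto. intros w Hwb.
    replace (RtoC 0) with (H2 (dgam r) c r w). apply CD_H1; auto.
    unfold H2. rewrite <- (circle_FTC (fun x => - K1 (x - w))%C (fun x => K2 (x - w)) c r).
    - apply CInt_ext. intros. ring.
    - intros t. pose proof (CD_opp _ _ _ (CD_inv w (gam c r t) (gam_ne c r t w Hr Hwb))) as X.
      replace (K2 (gam c r t - w)) with (- - / ((gam c r t - w) * (gam c r t - w)))%C. exact X.
      unfold K2. field. intro E0. apply (gam_ne c r t w Hr Hwb). apply Ceq_minus. exact E0.
    - intros t. unfold K2. apply (Ccont_mult (fun x => K1 (x - w)) (fun x => K1 (x - w)));
        apply Ccont_K1_shift; apply gam_ne; auto. }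
  rewrite E. unfold H1. rewrite <- CInt_const. apply CInt_ext. intros t _.
  unfold dgam, K1, gam. replace (c + RtoC r * cis t - c)%C with (RtoC r * cis t)%C by ring.
  assert (Hcis : cis t <> RtoC 0). { intro E0. pose proof (Cmod_cis t). rewrite E0, Cmod_0 in H. lra. }
  assert (Hr0 : RtoC r <> RtoC 0). { intro E0. apply RtoC_inj in E0. lra. }
  field. auto.
Qed.

Definition phi_p (g : C -> C) (p lp : C) (w : C) : C :=
  if excluded_middle_informative (w = p) then lp else ((g w - g p) * K1 (w - p))%C.

Definition omg (g : C -> C) c r t : C := (g (gam c r t) * dgam r t)%C.

Lemma cauchy_formula g c r R0 p : 0 < r < R0 -> (forall w, inball c R0 w -> exists l, CD g w l) -> inball c r p ->
  H1 (omg g c r) c r p = (g p * (Ci * RtoC (2 * PI - 0)))%C.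
Proof.
  intros Hr Hg Hp.
  assert (HpR : inball c R0 p) by (unfold inball in *; lra).
  destruct (Hg p HpR) as [lp Hlp].
  set (phi := phi_p g p lp).
  assert (Ef : forall w, w <> p -> phi w = ((g w - g p) * K1 (w - p))%C).
  { intros w Hw. unfold phi, phi_p. destruct excluded_middle_informative; [contradiction|reflexivity]. }
  assert (Nf : forall w, w <> p -> near w (fun x => ((g x - g p) * K1 (x - p))%C = phi x)).
  { intros w Hw. exists (Cmod (w - p)). split. apply Cmod_gt_0. intro E. apply Hw. apply Ceq_minus. exact E.
    intros x Hx. symmetry. apply Ef. intro E. subst x. rewrite Cmod_sub_sym in Hx. lra. }
  assert (CDf : forall w, inball c R0 w -> w <> p -> exists l, CD phi w l).
  { intros w Hw Hne. destruct (Hg w Hw) as [lw Hlw].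
    eexists. eapply CD_local. apply Nf; auto.
    apply (CD_mult (fun x => g x - g p)%C (fun x => K1 (x - p))).
    apply CD_minus. exact Hlw. apply CD_const. apply CD_inv. auto. }
  assert (Cf : forall w, inball c R0 w -> Ccont phi w).
  { intros w Hw. destruct (excluded_middle_informative (w = p)) as [E|E].
    - subst w. intros eps He. destruct (Hlp (eps / 2) ltac:(lra)) as [d [Hd K]]. exists d. split; auto.
      intros x Hx. assert (Hpp : phi p = lp) by (unfold phi, phi_p; destruct excluded_middle_informative; [reflexivity|contradiction]).
      rewrite Hpp. destruct (excluded_middle_informative (x = p)) as [Ex|Ex].
      + subst x. rewrite Hpp. replace (lp - lp)%C with (RtoC 0) by ring. rewrite Cmod_0. lra.
      + rewrite Ef by auto. specialize (K x Hx).
        assert (Hxp : (x - p)%C <> RtoC 0) by (intro E0; apply Ex; apply Ceq_minus; exact E0).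
        replace ((g x - g p) * K1 (x - p) - lp)%C with ((g x - g p - lp * (x - p)) * / (x - p))%C by (unfold K1; field; auto).
        rewrite Cmod_mult, Cmod_inv by auto.
        assert (0 < Cmod (x - p)) by (apply Cmod_gt_0; auto).
        apply Rle_lt_trans with (eps / 2 * Cmod (x - p) * / Cmod (x - p)).
        apply Rmult_le_compat_r. left. apply Rinv_0_lt_compat; auto. exact K.
        replace (eps / 2 * Cmod (x - p) * / Cmod (x - p)) with (eps / 2) by (field; lra). lra.
    - destruct (CDf w Hw E) as [l Hl]. eapply CD_cont. exact Hl. }
  assert (Prim := seg_primitive phi c R0 p HpR Cf CDf).
  assert (Hgc : forall t, Ccont g (gam c r t)).
  { intros t. destruct (Hg (gam c r t) (gam_in c r R0 t ltac:(lra))) as [l Hl]. eapply CD_cont; eauto. }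
  assert (Rom : forall t, rcont (omg g c r) t).
  { intros t. unfold omg. apply rcont_mult. apply rcont_comp. apply rcont_gam. apply Hgc. apply rcont_dgam. }
  assert (Z := circle_FTC (fun w => Seg phi p w) phi c r).
  assert (Z0 : CInt (fun t => phi (gam c r t) * dgam r t)%C 0 (2 * PI) = RtoC 0).
  { apply Z. intros t. apply Prim. apply gam_in; lra. intros t. apply Cf. apply gam_in; lra. }
  clear Z.
  rewrite (CInt_ext _ (fun t => omg g c r t * K1 (gam c r t - p) - g p * (dgam r t * K1 (gam c r t - p)))%C) in Z0.
  2: { intros t _. rewrite Ef by (apply gam_ne; [lra|exact Hp]). unfold omg. ring. }
  assert (R1 : RCont (fun t => omg g c r t * K1 (gam c r t - p))%C 0 (2 * PI)).
  { intros t _. apply rcont_mult. apply Rom. apply rcont_K_gam; [apply Ccont_K1 | lra | exact Hp]. }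
  assert (R2 : RCont (fun t => dgam r t * K1 (gam c r t - p))%C 0 (2 * PI)).
  { intros t _. apply rcont_mult. apply rcont_dgam. apply rcont_K_gam; [apply Ccont_K1 | lra | exact Hp]. }
  rewrite CInt_minus in Z0; auto.
  2: { intros t Ht. apply rcont_mult. apply rcont_const. apply R2; auto. }
  rewrite CInt_scal in Z0 by auto.
  fold (H1 (omg g c r) c r p) in Z0. fold (H1 (dgam r) c r p) in Z0.
  rewrite I_const in Z0 by (auto; lra).
  apply Ceq_minus. exact Z0.
Qed.

Theorem deriv_holo g c0 R0 : (forall w, inball c0 R0 w -> exists l, CD g w l) ->
  forall z, inball c0 R0 z -> exists l, CD (cderiv g) z l.
Proof.
  intros Hg z Hz. unfold inball in Hz.
  set (rho := R0 - Cmod (z - c0)). assert (Hrho : 0 < rho) by (unfold rho; lra).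
  set (r := rho / 2).
  assert (Hg' : forall w, inball z rho w -> exists l, CD g w l).
  { intros w Hw. apply Hg. unfold inball in *. replace (w - c0)%C with ((w - z) + (z - c0))%C by ring.
    eapply Rle_lt_trans. apply Cmod_triangle. unfold rho in Hw. lra. }
  assert (Hr : 0 < r < rho) by (unfold r; lra).
  set (I := (Ci * RtoC (2 * PI - 0))%C).
  assert (HI : I <> RtoC 0).
  { unfold I. apply Cmult_neq_0. apply Ci_nz. intro E. apply RtoC_inj in E. pose proof PI_RGT_0. lra. }
  set (om := omg g z r).
  assert (Hgc : forall t, Ccont g (gam z r t)).
  { intros t. destruct (Hg' (gam z r t) (gam_in z r rho t ltac:(lra))) as [l Hl]. eapply CD_cont; eauto. }
  assert (Rom : forall t, rcont om t).
  { intros t. unfold om, omg. apply rcont_mult. apply rcont_comp. apply rcont_gam. apply Hgc. apply rcont_dgam. }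
  assert (Eg : forall w, inball z r w -> g w = (/ I * H1 om z r w)%C).
  { intros w Hw. unfold om. rewrite (cauchy_formula g z r rho w Hr Hg' Hw). fold I. field. exact HI. }
  assert (Dg : forall w, inball z r w -> cderiv g w = (/ I * H2 om z r w)%C).
  { intros w Hw. apply cderiv_CD.
    apply (CD_local (fun x => / I * H1 om z r x)%C).
    - exists (r - Cmod (w - z)). split. unfold inball in Hw. lra.
      intros x Hx. symmetry. apply Eg. unfold inball in *. replace (x - z)%C with ((x - w) + (w - z))%C by ring.
      eapply Rle_lt_trans. apply Cmod_triangle. lra.
    - apply CD_scal. apply CD_H1; auto. lra. }
  assert (Hz0 : inball z r z) by (unfold inball; replace (z - z)%C with (RtoC 0) by ring; rewrite Cmod_0; lra).
  exists (/ I * H3 om z r z)%C.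
  apply (CD_local (fun x => / I * H2 om z r x)%C).
  - exists r. split. lra. intros x Hx. symmetry. apply Dg. exact Hx.
  - apply CD_scal. apply CD_H2; auto. lra.
Qed.


Definition holoD (f : C -> C) : Prop := forall z, in_disc z -> exists l, CD f z l.

Lemma holo_disc_D f : holo_disc f <-> holoD f.
Proof. unfold holo_disc, holoD. split; intros H z Hz; apply cdiff_CD; auto. Qed.

Lemma in_disc_ball z : in_disc z <-> inball (RtoC 0) 1 z.
Proof. unfold in_disc, inball. replace (z - RtoC 0)%C with z by ring. tauto. Qed.

Lemma disc_to_ball z : in_disc z -> inball (RtoC 0) 1 z.
Proof. exact (proj1 (in_disc_ball z)). Qed.
Lemma ball_to_disc z : inball (RtoC 0) 1 z -> in_disc z.
Proof. exact (proj2 (in_disc_ball z)). Qed.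

Lemma holoD_CD f z : holoD f -> in_disc z -> CD f z (cderiv f z).
Proof. intros H Hz. destruct (H z Hz) as [l Hl]. rewrite (cderiv_CD f z l Hl). exact Hl. Qed.

Lemma holoD_cont f z : holoD f -> in_disc z -> Ccont f z.
Proof. intros H Hz. destruct (H z Hz) as [l Hl]. eapply CD_cont; eauto. Qed.

Lemma holoD_deriv f : holoD f -> holoD (cderiv f).
Proof.
  intros H z Hz. apply (deriv_holo f (RtoC 0) 1).
  - intros w Hw. apply H. apply ball_to_disc. exact Hw.
  - apply disc_to_ball. exact Hz.
Qed.

Lemma cint0_Seg k z : cint0 k z = Seg k (RtoC 0) z.
Proof.
  unfold cint0, Seg, CInt.
  replace (z - RtoC 0)%C with z by ring. f_equal. f_equal; apply RInt_ext; intros; do 2 f_equal; ring.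
Qed.

Lemma cint0_0 k : cint0 k (RtoC 0) = RtoC 0.
Proof. unfold cint0. ring. Qed.

Lemma cint0_CD k : holoD k -> forall z, in_disc z -> CD (cint0 k) z (k z).
Proof.
  intros Hk z Hz.
  replace (cint0 k) with (fun w => Seg k (RtoC 0) w) by (extensionality w; symmetry; apply cint0_Seg).
  apply (seg_primitive k (RtoC 0) 1 (RtoC 0)).
  - apply disc_to_ball. unfold in_disc. rewrite Cmod_0. lra.
  - intros w Hw. apply holoD_cont; auto. apply ball_to_disc; auto.
  - intros w Hw _. apply Hk. apply ball_to_disc; auto.
  - apply disc_to_ball; auto.
Qed.

Lemma Tg_CD g X : holoD g -> holoD X -> forall z, in_disc z -> CD (Tg g X) z (X z * cderiv g z)%C.
Proof.
  intros Hg HX z Hz. unfold Tg. apply (cint0_CD (fun w => X w * cderiv g w)%C); auto.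
  intros w Hw. eexists. apply CD_mult. apply holoD_CD; auto. apply holoD_CD; auto. apply holoD_deriv; auto.
Qed.

Lemma Sg_CD g X : holoD g -> holoD X -> forall z, in_disc z -> CD (Sg g X) z (cderiv X z * g z)%C.
Proof.
  intros Hg HX z Hz. unfold Sg. apply (cint0_CD (fun w => cderiv X w * g w)%C); auto.
  intros w Hw. eexists. apply CD_mult. apply holoD_CD; auto. apply holoD_deriv; auto. apply holoD_CD; auto.
Qed.

Lemma Tg_holo g X : holoD g -> holoD X -> holoD (Tg g X).
Proof. intros Hg HX z Hz. eexists. apply Tg_CD; auto. Qed.
Lemma Sg_holo g X : holoD g -> holoD X -> holoD (Sg g X).
Proof. intros Hg HX z Hz. eexists. apply Sg_CD; auto. Qed.

Lemma Tg_0 g X : Tg g X (RtoC 0) = RtoC 0.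
Proof. apply cint0_0. Qed.
Lemma Sg_0 g X : Sg g X (RtoC 0) = RtoC 0.
Proof. apply cint0_0. Qed.

Definition eqD (F G : C -> C) : Prop := forall z, in_disc z -> F z = G z.

Lemma disc_seg z t : in_disc z -> 0 <= t <= 1 -> in_disc (Cmult (RtoC t) z).
Proof. unfold in_disc. intros H Ht. rewrite Cmod_mult, Cmod_R, Rabs_pos_eq by lra. pose proof (Cmod_ge_0 z). nra. Qed.

Lemma cint0_ext k1 k2 : eqD k1 k2 -> eqD (cint0 k1) (cint0 k2).
Proof.
  intros H z Hz. unfold cint0. f_equal. f_equal.
  - apply RInt_ext. intros x Hx. rewrite Rmin_left, Rmax_right in Hx by lra. rewrite H. reflexivity. apply disc_seg; auto; lra.
  - apply RInt_ext. intros x Hx. rewrite Rmin_left, Rmax_right in Hx by lra. rewrite H. reflexivity. apply disc_seg; auto; lra.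
Qed.

Lemma cderiv_local X Y z : near z (fun w => X w = Y w) -> cderiv X z = cderiv Y z.
Proof.
  intros H. destruct (excluded_middle_informative (cdiff X z)) as [D|D].
  - apply cdiff_CD in D. destruct D as [l Hl]. rewrite (cderiv_CD X z l Hl). symmetry. apply cderiv_CD.
    eapply CD_local; eauto.
  - rewrite (cderiv_nodiff X z D). symmetry. apply cderiv_nodiff. intro D'. apply D.
    apply cdiff_CD in D'. destruct D' as [l Hl]. apply cdiff_CD. exists l. eapply CD_local; [|exact Hl].
    destruct H as [d [Hd K]]. exists d. split; auto. intros w Hw. symmetry. auto.
Qed.

Lemma near_disc z : in_disc z -> near z in_disc.
Proof.
  unfold in_disc. intros H. exists (1 - Cmod z). split. lra. intros w Hw.
  replace w with ((w - z) + z)%C by ring. eapply Rle_lt_trans. apply Cmod_triangle. lra.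
Qed.

Lemma cderiv_eqD X Y : eqD X Y -> eqD (cderiv X) (cderiv Y).
Proof.
  intros H z Hz. apply cderiv_local. apply (near_mono z in_disc). intros w Hw. apply H; auto. apply near_disc; auto.
Qed.

Lemma Tg_eqD g X Y : eqD X Y -> eqD (Tg g X) (Tg g Y).
Proof. intros H. unfold Tg. apply cint0_ext. intros z Hz. rewrite H; auto. Qed.

Lemma Sg_eqD g X Y : eqD X Y -> eqD (Sg g X) (Sg g Y).
Proof. intros H. unfold Sg. apply cint0_ext. intros z Hz. rewrite (cderiv_eqD X Y H z Hz). reflexivity. Qed.

Lemma eqD_deriv F G dF dG : (forall z, in_disc z -> CD F z (dF z)) -> (forall z, in_disc z -> CD G z (dG z)) ->
  eqD dF dG -> F (RtoC 0) = G (RtoC 0) -> eqD F G.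
Proof.
  intros HF HG Hd H0 z Hz.
  assert (E : (F z - G z)%C = (F (RtoC 0) - G (RtoC 0))%C).
  { apply (CD_zero_const (fun w => F w - G w)%C (RtoC 0) 1 z).
    - intros w Hw. apply ball_to_disc in Hw. replace (RtoC 0) with (dF w - dG w)%C by (rewrite Hd; auto; ring).
      apply CD_minus; auto.
    - apply disc_to_ball; auto. }
  rewrite H0 in E. apply Ceq_minus. rewrite E. ring.
Qed.

Lemma holoD_plus F G : holoD F -> holoD G -> holoD (fun w => F w + G w)%C.
Proof. intros HF HG z Hz. destruct (HF z Hz) as [a Ha]. destruct (HG z Hz) as [b Hb]. eexists. apply CD_plus; eauto. Qed.
Lemma holoD_scal c F : holoD F -> holoD (fun w => c * F w)%C.
Proof. intros HF z Hz. destruct (HF z Hz) as [a Ha]. eexists. apply CD_scal; eauto. Qed.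
Lemma holoD_const c : holoD (fun _ => c).
Proof. intros z _. eexists. apply CD_const. Qed.

Lemma cderiv_plus F G z : holoD F -> holoD G -> in_disc z -> cderiv (fun w => F w + G w)%C z = (cderiv F z + cderiv G z)%C.
Proof. intros. apply cderiv_CD. apply CD_plus; apply holoD_CD; auto. Qed.
Lemma cderiv_scal c F z : holoD F -> in_disc z -> cderiv (fun w => c * F w)%C z = (c * cderiv F z)%C.
Proof. intros. apply cderiv_CD. apply CD_scal; apply holoD_CD; auto. Qed.

Lemma Tg_plus g X Y : holoD g -> holoD X -> holoD Y -> eqD (Tg g (fun w => X w + Y w)%C) (fun z => Tg g X z + Tg g Y z)%C.
Proof.
  intros Hg HX HY. apply (eqD_deriv _ _ (fun z => (X z + Y z) * cderiv g z)%C (fun z => X z * cderiv g z + Y z * cderiv g z)%C).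
  - apply Tg_CD; auto. apply holoD_plus; auto.
  - intros z Hz. apply CD_plus; apply Tg_CD; auto.
  - intros z _. ring.
  - rewrite !Tg_0. ring.
Qed.

Lemma Tg_scal g c X : holoD g -> holoD X -> eqD (Tg g (fun w => c * X w)%C) (fun z => c * Tg g X z)%C.
Proof.
  intros Hg HX. apply (eqD_deriv _ _ (fun z => (c * X z) * cderiv g z)%C (fun z => c * (X z * cderiv g z))%C).
  - apply Tg_CD; auto. apply holoD_scal; auto.
  - intros z Hz. apply CD_scal; apply Tg_CD; auto.
  - intros z _. ring.
  - rewrite !Tg_0. ring.
Qed.

Lemma Sg_plus g X Y : holoD g -> holoD X -> holoD Y -> eqD (Sg g (fun w => X w + Y w)%C) (fun z => Sg g X z + Sg g Y z)%C.
Proof.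
  intros Hg HX HY. apply (eqD_deriv _ _ (fun z => cderiv (fun w => X w + Y w)%C z * g z)%C (fun z => cderiv X z * g z + cderiv Y z * g z)%C).
  - apply Sg_CD; auto. apply holoD_plus; auto.
  - intros z Hz. apply CD_plus; apply Sg_CD; auto.
  - intros z Hz. rewrite cderiv_plus; auto. ring.
  - rewrite !Sg_0. ring.
Qed.

Lemma Sg_scal g c X : holoD g -> holoD X -> eqD (Sg g (fun w => c * X w)%C) (fun z => c * Sg g X z)%C.
Proof.
  intros Hg HX. apply (eqD_deriv _ _ (fun z => cderiv (fun w => c * X w)%C z * g z)%C (fun z => c * (cderiv X z * g z))%C).
  - apply Sg_CD; auto. apply holoD_scal; auto.
  - intros z Hz. apply CD_scal; apply Sg_CD; auto.
  - intros z Hz. rewrite cderiv_scal; auto. ring.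
  - rewrite !Sg_0. ring.
Qed.

Lemma Tg_zero g : holoD g -> eqD (Tg g (fun _ => RtoC 0)) (fun _ => RtoC 0).
Proof.
  intros Hg. apply (eqD_deriv _ _ (fun z => RtoC 0 * cderiv g z)%C (fun _ => RtoC 0)).
  - apply Tg_CD; auto. apply holoD_const.
  - intros z _. apply CD_const.
  - intros z _. ring.
  - rewrite Tg_0. reflexivity.
Qed.

Lemma Sg_zero g : holoD g -> eqD (Sg g (fun _ => RtoC 0)) (fun _ => RtoC 0).
Proof.
  intros Hg. apply (eqD_deriv _ _ (fun z => cderiv (fun _ => RtoC 0) z * g z)%C (fun _ => RtoC 0)).
  - apply Sg_CD; auto. apply holoD_const.
  - intros z _. apply CD_const.
  - intros z _. rewrite (cderiv_CD (fun _ => RtoC 0) z (RtoC 0)) by apply CD_const. ring.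
  - rewrite Sg_0. reflexivity.
Qed.

Lemma commute g h : holoD g -> holoD h -> h (RtoC 0) = RtoC 0 ->
  eqD (Tg g (Sg g h)) (fun z => Sg g (Tg g h) z - Tg g (Tg g h) z)%C.
Proof.
  intros Hg Hh H0.
  assert (E : eqD (Sg g h) (fun z => h z * g z - Tg g h z)%C).
  { apply (eqD_deriv _ _ (fun z => cderiv h z * g z)%C (fun z => (cderiv h z * g z + h z * cderiv g z) - h z * cderiv g z)%C).
    - apply Sg_CD; auto.
    - intros z Hz. apply CD_minus. apply CD_mult; apply holoD_CD; auto. apply Tg_CD; auto.
    - intros z _. ring.
    - rewrite Sg_0, Tg_0, H0. ring. }
  apply (eqD_deriv _ _ (fun z => Sg g h z * cderiv g z)%C (fun z => cderiv (Tg g h) z * g z - Tg g h z * cderiv g z)%C).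
  - apply Tg_CD; auto. apply Sg_holo; auto.
  - intros z Hz. apply CD_minus. apply Sg_CD; auto. apply Tg_holo; auto. apply Tg_CD; auto. apply Tg_holo; auto.
  - intros z Hz. rewrite E by auto. rewrite (cderiv_CD _ _ _ (Tg_CD g h Hg Hh z Hz)). ring.
  - rewrite !Tg_0, Sg_0. ring.
Qed.


Fixpoint csum (F : nat -> C) (N : nat) : C :=
  match N with O => RtoC 0 | S N' => (csum F N' + F N')%C end.

Lemma csum_ext F G N : (forall k, (k < N)%nat -> F k = G k) -> csum F N = csum G N.
Proof. induction N; intros H; simpl; auto. rewrite IHN by (intros; apply H; lia). rewrite H by lia. reflexivity. Qed.

Lemma csum_plus F G N : csum (fun k => F k + G k)%C N = (csum F N + csum G N)%C.
Proof. induction N; simpl. ring. rewrite IHN. ring. Qed.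

Lemma csum_scal c F N : csum (fun k => c * F k)%C N = (c * csum F N)%C.
Proof. induction N; simpl. ring. rewrite IHN. ring. Qed.

Lemma csum_zero F N : (forall k, (k < N)%nat -> F k = RtoC 0) -> csum F N = RtoC 0.
Proof. induction N; intros H; simpl; auto. rewrite IHN by (intros; apply H; lia). rewrite H by lia. ring. Qed.

Lemma csum_split F N M : csum F (N + M) = (csum F N + csum (fun i => F (N + i)%nat) M)%C.
Proof. induction M; simpl. rewrite Nat.add_0_r. ring. rewrite Nat.add_succ_r. simpl. rewrite IHM. ring. Qed.

Lemma csum_first F N : csum F (S N) = (F O + csum (fun i => F (S i)) N)%C.
Proof. change (S N) with (1 + N)%nat. rewrite csum_split. replace (csum F 1) with (F O) by (simpl; ring). reflexivity. Qed.

Lemma fold_seq (F : nat -> C) s m : fold_right Cplus (RtoC 0) (map F (seq s m)) = csum (fun i => F (s + i)%nat) m.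
Proof.
  revert s. induction m; intros s. reflexivity.
  change (seq s (S m)) with (s :: seq (S s) m).
  change (fold_right Cplus (RtoC 0) (map F (s :: seq (S s) m))) with (F s + fold_right Cplus (RtoC 0) (map F (seq (S s) m)))%C.
  rewrite IHm, csum_first, Nat.add_0_r. f_equal. apply csum_ext. intros. f_equal. lia.
Qed.

Definition SPw (g f : C -> C) (a b : nat) : C -> C := op_pow (Sg g) a (op_pow (Tg g) b f).
Definition Xt (g f : C -> C) (m n k : nat) : C -> C := SPw g f (m - k) (n + k).

Lemma holo_Tpow g f b : holoD g -> holoD f -> holoD (op_pow (Tg g) b f).
Proof. intros Hg Hf. induction b; simpl; auto. apply Tg_holo; auto. Qed.
Lemma holo_SPw g f a b : holoD g -> holoD f -> holoD (SPw g f a b).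
Proof. intros Hg Hf. unfold SPw. induction a; simpl. apply holo_Tpow; auto. apply Sg_holo; auto. Qed.

Lemma SPw_0 g f a b : (1 <= a + b)%nat -> SPw g f a b (RtoC 0) = RtoC 0.
Proof.
  intros H. unfold SPw. destruct a; simpl.
  - destruct b; [lia|]. simpl. apply Tg_0.
  - apply Sg_0.
Qed.

Definition LC (g f : C -> C) (m n : nat) (e : nat -> Z) : C -> C :=
  fun z => csum (fun k => RtoC (IZR (e k)) * Xt g f m n k z)%C (S m).

Definition SpanC (m n : nat) (c : Z) (W : (C -> C) -> (C -> C) -> C -> C) : Prop :=
  exists e : nat -> Z, e O = c /\ forall g f, holoD g -> holoD f -> eqD (W g f) (LC g f m n e).

Lemma holo_csum (c : nat -> C) (F : nat -> C -> C) N : (forall k, holoD (F k)) -> holoD (fun z => csum (fun k => c k * F k z)%C N).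
Proof.
  intros H. induction N; simpl. apply holoD_const.
  apply holoD_plus; auto. apply holoD_scal; auto.
Qed.

Lemma T_csum g (c : nat -> C) (F : nat -> C -> C) N : holoD g -> (forall k, holoD (F k)) ->
  eqD (Tg g (fun z => csum (fun k => c k * F k z)%C N)) (fun z => csum (fun k => c k * Tg g (F k) z)%C N).
Proof.
  intros Hg HF. induction N; simpl.
  - apply Tg_zero; auto.
  - intros z Hz. rewrite Tg_plus; auto. rewrite IHN by auto. rewrite Tg_scal; auto.
    apply holo_csum; auto. apply holoD_scal; auto.
Qed.

Lemma S_csum g (c : nat -> C) (F : nat -> C -> C) N : holoD g -> (forall k, holoD (F k)) ->
  eqD (Sg g (fun z => csum (fun k => c k * F k z)%C N)) (fun z => csum (fun k => c k * Sg g (F k) z)%C N).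
Proof.
  intros Hg HF. induction N; simpl.
  - apply Sg_zero; auto.
  - intros z Hz. rewrite Sg_plus; auto. rewrite IHN by auto. rewrite Sg_scal; auto.
    apply holo_csum; auto. apply holoD_scal; auto.
Qed.

Lemma SpanC_eqD m n c W W' : SpanC m n c W -> (forall g f, holoD g -> holoD f -> eqD (W' g f) (W g f)) -> SpanC m n c W'.
Proof.
  intros [e [He H]] H'. exists e. split; auto. intros g f Hg Hf z Hz. rewrite H'; auto. apply H; auto.
Qed.

Lemma SpanC_plus m n c1 c2 W1 W2 : SpanC m n c1 W1 -> SpanC m n c2 W2 ->
  SpanC m n (c1 + c2)%Z (fun g f z => W1 g f z + W2 g f z)%C.
Proof.
  intros [e1 [He1 H1]] [e2 [He2 H2]]. exists (fun k => e1 k + e2 k)%Z. split. rewrite He1, He2. reflexivity.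
  intros g f Hg Hf z Hz. rewrite H1, H2 by auto. unfold LC. rewrite <- csum_plus. apply csum_ext. intros k _.
  rewrite plus_IZR, RtoC_plus. ring.
Qed.

Lemma SpanC_scal m n a c W : SpanC m n c W -> SpanC m n (a * c)%Z (fun g f z => RtoC (IZR a) * W g f z)%C.
Proof.
  intros [e [He H]]. exists (fun k => a * e k)%Z. split. rewrite He. reflexivity.
  intros g f Hg Hf z Hz. rewrite H by auto. unfold LC. rewrite <- csum_scal. apply csum_ext. intros k _.
  rewrite mult_IZR, RtoC_mult. ring.
Qed.

Lemma SpanC_zero m n : SpanC m n 0%Z (fun _ _ _ => RtoC 0).
Proof.
  exists (fun _ => 0%Z). split. reflexivity. intros g f Hg Hf z Hz. unfold LC. symmetry. apply csum_zero.
  intros. simpl. ring.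
Qed.

Lemma SpanC_embed m n s c W : (s <= m)%nat -> SpanC (m - s) (n + s) c W -> SpanC m n (if Nat.eqb s 0 then c else 0%Z) W.
Proof.
  intros Hs [e [He H]]. exists (fun k => if Nat.leb s k then e (k - s)%nat else 0%Z). split.
  { destruct s; simpl. rewrite He. reflexivity. reflexivity. }
  intros g f Hg Hf z Hz. rewrite H by auto. unfold LC.
  replace (S m) with (s + S (m - s))%nat by lia. rewrite csum_split.
  rewrite (csum_zero _ s). 2: { intros k Hk. replace (Nat.leb s k) with false. simpl. ring. symmetry. apply Nat.leb_gt. lia. }
  rewrite Cplus_0_l. apply csum_ext. intros i Hi.
  replace (Nat.leb s (s + i)) with true by (symmetry; apply Nat.leb_le; lia).
  replace (s + i - s)%nat with i by lia. f_equal. unfold Xt. f_equal; lia.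
Qed.

Lemma SpanC_S m n c W : SpanC m n c W -> SpanC (S m) n c (fun g f => Sg g (W g f)).
Proof.
  intros [e [He H]]. exists (fun k => if Nat.leb k m then e k else 0%Z). split. simpl. exact He.
  intros g f Hg Hf z Hz. rewrite (Sg_eqD g (W g f) (LC g f m n e) (H g f Hg Hf) z Hz).
  unfold LC. rewrite S_csum; auto. 2: { intros k. apply holo_SPw; auto. }
  change (csum (fun k => RtoC (IZR (if Nat.leb k m then e k else 0%Z)) * Xt g f (S m) n k z)%C (S (S m)))
    with (csum (fun k => RtoC (IZR (if Nat.leb k m then e k else 0%Z)) * Xt g f (S m) n k z)%C (S m) +
          RtoC (IZR (if Nat.leb (S m) m then e (S m) else 0%Z)) * Xt g f (S m) n (S m) z)%C.
  replace (Nat.leb (S m) m) with false by (symmetry; apply Nat.leb_gt; lia). simpl IZR.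
  rewrite Cmult_0_l, Cplus_0_r. apply csum_ext. intros k Hk.
  replace (Nat.leb k m) with true by (symmetry; apply Nat.leb_le; lia). f_equal.
  unfold Xt, SPw. replace (S m - k)%nat with (S (m - k)) by lia. reflexivity.
Qed.

Lemma SpanC_T m n c W : (forall k, (k <= m)%nat -> SpanC (m - k) (S (n + k)) 1%Z (fun g f => Tg g (Xt g f m n k))) ->
  SpanC m n c W -> SpanC m (S n) c (fun g f => Tg g (W g f)).
Proof.
  intros HT [e [He H]].
  assert (P : forall N, (N <= S m)%nat -> SpanC m (S n) (if Nat.eqb N 0 then 0%Z else e O)
     (fun g f z => csum (fun k => RtoC (IZR (e k)) * Tg g (Xt g f m n k) z)%C N)).
  { induction N; intros HN.
    - simpl. apply SpanC_zero.
    - simpl csum. specialize (IHN ltac:(lia)).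
      assert (Hk := HT N ltac:(lia)).
      replace (S (n + N)) with (S n + N)%nat in Hk by lia.
      apply SpanC_embed in Hk; [|lia].
      apply (SpanC_scal _ _ (e N)) in Hk.
      pose proof (SpanC_plus _ _ _ _ _ _ IHN Hk) as Hs.
      replace (if Nat.eqb (S N) 0 then 0%Z else e O) with ((if Nat.eqb N 0 then 0%Z else e O) + e N * (if Nat.eqb N 0 then 1%Z else 0%Z))%Z.
      exact Hs.
      destruct N; simpl; lia. }
  specialize (P (S m) ltac:(lia)). simpl in P. rewrite He in P.
  eapply SpanC_eqD. exact P.
  intros g f Hg Hf z Hz. rewrite (Tg_eqD g (W g f) (LC g f m n e) (H g f Hg Hf) z Hz).
  unfold LC. rewrite T_csum; auto. intros k. apply holo_SPw; auto.
Qed.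


Lemma RtoC_IZR_m1 : RtoC (IZR (-1)) = (- RtoC 1)%C.
Proof. unfold RtoC, Copp. simpl. f_equal; lra. Qed.

Lemma TL_strong : forall N a b, (a <= N)%nat -> (1 <= b)%nat ->
  SpanC a (S b) 1%Z (fun g f => Tg g (SPw g f a b)).
Proof.
  induction N; intros a b Ha Hb.
  - assert (a = O) by lia. subst a.
    exists (fun _ => 1%Z). split. reflexivity. intros g f Hg Hf z Hz. unfold LC. simpl. unfold Xt, SPw. simpl.
    rewrite Nat.add_0_r. simpl. ring.
  - destruct a as [|a'].
    + apply IHN; lia.
    + set (h := fun g f => SPw g f a' b).
      assert (H1 : SpanC a' (S b) 1%Z (fun g f => Tg g (h g f))) by (apply IHN; lia).
      assert (H2 : SpanC (S a') (S b) 1%Z (fun g f => Sg g (Tg g (h g f)))) by (apply SpanC_S; exact H1).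
      assert (H3 : SpanC a' (S (S b)) 1%Z (fun g f => Tg g (Tg g (h g f)))).
      { apply SpanC_T; auto. intros k Hk. unfold Xt.
        apply IHN; lia. }
      assert (H3' : SpanC (S a') (S b) 0%Z (fun g f => Tg g (Tg g (h g f)))).
      { apply (SpanC_embed (S a') (S b) 1 1%Z). lia. replace (S a' - 1)%nat with a' by lia.
        replace (S b + 1)%nat with (S (S b)) by lia. exact H3. }
      pose proof (SpanC_plus _ _ _ _ _ _ H2 (SpanC_scal _ _ (-1)%Z _ _ H3')) as HS.
      simpl in HS. eapply SpanC_eqD. exact HS.
      intros g f Hg Hf z Hz. unfold SPw. simpl. fold (SPw g f a' b). fold (h g f).
      rewrite commute; auto.
      + rewrite RtoC_IZR_m1. ring.
      + unfold h. apply holo_SPw; auto.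
      + unfold h. apply SPw_0. lia.
Qed.

Lemma TL a b : (1 <= b)%nat -> SpanC a (S b) 1%Z (fun g f => Tg g (SPw g f a b)).
Proof. intros. apply (TL_strong a); auto. Qed.

Lemma count_T_cons_t l : count_T (true :: l) = S (count_T l).
Proof. unfold count_T. simpl. destruct (Bool.bool_dec true true); [reflexivity|congruence]. Qed.
Lemma count_T_cons_f l : count_T (false :: l) = count_T l.
Proof. unfold count_T. simpl. destruct (Bool.bool_dec false true); [congruence|reflexivity]. Qed.
Lemma count_S_cons_t l : count_S (true :: l) = count_S l.
Proof. unfold count_S. simpl. destruct (Bool.bool_dec true false); [congruence|reflexivity]. Qed.
Lemma count_S_cons_f l : count_S (false :: l) = S (count_S l).
Proof. unfold count_S. simpl. destruct (Bool.bool_dec false false); [reflexivity|congruence]. Qed.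

Lemma last_true_count l : last l false = true -> (1 <= count_T l)%nat.
Proof.
  induction l as [|x l IH]; simpl; intros H. discriminate.
  destruct x.
  - rewrite count_T_cons_t. lia.
  - rewrite count_T_cons_f. destruct l. discriminate. apply IH. exact H.
Qed.

Lemma word_span : forall w m n, is_WT_pattern m n w -> SpanC m n 1%Z (fun g f => word_op g w f).
Proof.
  induction w as [|x w IH]; intros m n [Hm [Hn Hl]].
  - simpl in Hl. discriminate.
  - destruct w as [|y w'].
    + simpl in Hl. subst x. unfold count_S, count_T in *. simpl in Hm, Hn. subst m n.
      exists (fun _ => 1%Z). split. reflexivity. intros g f Hg Hf z Hz. unfold LC, Xt, SPw. simpl. ring.
    + assert (Hl' : last (y :: w') false = true) by exact Hl.
      specialize (IH (count_S (y :: w')) (count_T (y :: w')) ltac:(split; [reflexivity|split; [reflexivity|exact Hl']])).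
      pose proof (last_true_count _ Hl') as Hc.
      destruct x.
      * rewrite count_S_cons_t in Hm. rewrite count_T_cons_t in Hn. subst m n.
        simpl word_op. apply SpanC_T; auto.
        intros k Hk. unfold Xt. apply TL. lia.
      * rewrite count_S_cons_f in Hm. rewrite count_T_cons_f in Hn. subst m n.
        simpl word_op. apply SpanC_S; auto.
Qed.


Theorem proposition3p7 (m n : nat) (hn : (1 <= n)%nat) (w : list bool)
  (hw : is_WT_pattern m n w) :
  exists c : nat -> Z,
    forall g : C -> C, holo_disc g ->
    forall f : C -> C, holo_disc f ->
    forall z : C, in_disc z ->
      word_op g w f z =
      Cplus (op_pow (Sg g) m (op_pow (Tg g) n f) z)
        (fold_right Cplus (RtoC 0)
          (map (fun j : nat =>
                  Cmult (RtoC (IZR (c j)))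
                        (op_pow (Sg g) (m - j) (op_pow (Tg g) (n + j) f) z))
               (seq 1 m))).
Proof.
  destruct (word_span w m n hw) as [e [He H]]. exists e. intros g Hg f Hf z Hz.
  apply holo_disc_D in Hg. apply holo_disc_D in Hf.
  rewrite (H g f Hg Hf z Hz). unfold LC. rewrite csum_first. rewrite fold_seq.
  rewrite He. unfold Xt, SPw. rewrite Nat.sub_0_r, Nat.add_0_r.
  f_equal. simpl IZR. ring.
Qed.
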